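(* The orderings $(\mathfrak{M}, \supseteq )$ and $(\mathfrak{N}, \supseteq )$ are atomless and not separative, and the separative quotient of $(\mathfrak{M}, \supseteq )$ is isomorphic to the ordering $(\mathfrak{M_H},\supseteq)$ of all hereditary meager ideals, via the map induced by $\Phi$, where for $I\in\mathfrak{M}$, $\Phi(I)=\{A\subseteq\omega: I\upharpoonright A \text{ is not meager in } 2^A\}$.
   Context: All ideals on $\omega$ considered are proper and contain all finite subsets of $\omega$; they are viewed as subsets of the Cantor space $2^\omega=\mathcal{P}(\omega)$. $\mathfrak{M}$ (resp. $\mathfrak{N}$) is the set of ideals on $\omega$ that are meager (resp. Lebesgue null) subsets of $2^\omega$, ordered by reverse inclusion. For $X\subseteq\omega$, $I\upharpoonright X=\{A\in I:A\subseteq X\}$, $I^+=\mathcal{P}(\omega)\setminus I$. An ideal $I$ is hereditary meager if $I\upharpoonright X$ is meager in $2^X$ for every $X\in I^+$; $\mathfrak{M_H}$ is the set of such ideals ordered by $\supseteq$. In $(\mathfrak{M},\supseteq)$ (resp. $(\mathfrak{N},\supseteq)$) two ideals are compatible if some ideal of the class contains both. An ordering is atomless if every element has two incompatible elements below it, and separative if whenever $p\not\leq q$ there is $r\leq p$ incompatible with $q$. The separative quotient identifies $p,q$ when exactly the same elements are incompatible with $p$ as with $q$. *)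

(* Defs.v *)
(* Ideals on omega viewed as subsets of the Cantor space.
   A subset of omega is represented by its characteristic function
   (nat -> bool), i.e. directly as a point of 2^omega. *)
From Stdlib Require Import Reals.
Open Scope R_scope.

Definition subw := nat -> bool.

Definition sub_le (A B : subw) : Prop := forall n, A n = true -> B n = true.

Definition finite_sub (A : subw) : Prop :=
  exists N, forall n, (N <= n)%nat -> A n = false.

Definition union_sub (A B : subw) : subw := fun n => orb (A n) (B n).

Definition full_sub : subw := fun _ => true.

Definition family := subw -> Prop.

Definition is_ideal (I : family) : Prop :=
  (forall A, finite_sub A -> I A) /\
  (forall A B, I B -> sub_le A B -> I A) /\
  (forall A B, I A -> I B -> I (union_sub A B)) /\
  ~ I full_sub.

(* ---- Topology of 2^X, for X subset of omega.
   2^X is identified with {f : subw | f subset X} (points f with f k = false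
   off X). *)
Definition in_cyl (X : subw) (n : nat) (s : subw) (f : subw) : Prop :=
  forall k, (k < n)%nat -> X k = true -> f k = s k.

Definition nowhere_dense_in (X : subw) (N : family) : Prop :=
  forall (n : nat) (s : subw), exists (m : nat) (t : subw),
    (n <= m)%nat /\
    (forall k, (k < n)%nat -> X k = true -> t k = s k) /\
    (forall f, sub_le f X -> in_cyl X m t f -> ~ N f).

Definition meager_in (X : subw) (N : family) : Prop :=
  exists D : nat -> family,
    (forall i, nowhere_dense_in X (D i)) /\
    (forall f, sub_le f X -> N f -> exists i, D i f).

Definition meager (N : family) : Prop := meager_in full_sub N.

(* Lebesgue (fair coin product) null subsets of 2^omega: for every eps > 0
   they are covered by countably many basic cylinders
   [n_i, s_i] = {f | forall k < n_i, f k = s_i k} (of measure 2^-n_i)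
   of total measure < eps. *)
Definition null (N : family) : Prop :=
  forall eps : R, 0 < eps ->
    exists (n : nat -> nat) (s : nat -> subw),
      (forall f, N f -> exists i, forall k, (k < n i)%nat -> f k = s i k) /\
      (forall K, sum_f_R0 (fun i => (/ 2) ^ (n i)) K < eps).

Definition restr (I : family) (X : subw) : family :=
  fun A => I A /\ sub_le A X.

Definition meager_ideal (I : family) : Prop := is_ideal I /\ meager I.
Definition null_ideal (I : family) : Prop := is_ideal I /\ null I.
Definition hered_meager_ideal (I : family) : Prop :=
  is_ideal I /\ forall X, ~ I X -> meager_in X (restr I X).

(* "J <= I" in (C, ⊇)  means  J ⊇ I *)
Definition ord_le (J I : family) : Prop := forall A, I A -> J A.

Definition compatible (C : family -> Prop) (I J : family) : Prop :=
  exists K, C K /\ ord_le K I /\ ord_le K J.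

Definition atomless (C : family -> Prop) : Prop :=
  forall I, C I -> exists J K, C J /\ C K /\ ord_le J I /\ ord_le K I /\
    ~ compatible C J K.

Definition separative (C : family -> Prop) : Prop :=
  forall p q, C p -> C q -> ~ ord_le p q ->
    exists r, C r /\ ord_le r p /\ ~ compatible C r q.

Definition sq_equiv (C : family -> Prop) (p q : family) : Prop :=
  forall r, C r -> (~ compatible C r p <-> ~ compatible C r q).

Definition sq_le (C : family -> Prop) (p q : family) : Prop :=
  forall r, C r -> ord_le r p -> compatible C r q.

Definition Phi (I : family) : family :=
  fun A => ~ meager_in A (restr I A).

(* Main.v *)
From Stdlib Require Import Reals Lra Lia Classical ClassicalEpsilon FunctionalExtensionality PropExtensionality Arith List Bool.
Require Import Defs.
From mathcomp Require classical_sets.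
Import ListNotations.

Definition dec (P : Prop) : bool := if excluded_middle_informative P then true else false.
Lemma dec_true (P : Prop) : dec P = true <-> P.
Proof. unfold dec; destruct (excluded_middle_informative P); split; auto; discriminate. Qed.
Lemma dec_false (P : Prop) : dec P = false <-> ~ P.
Proof. unfold dec; destruct (excluded_middle_informative P); split; auto; try discriminate; tauto. Qed.

Definition inter (x y : subw) : subw := fun n => andb (x n) (y n).
Definition compl (x : subw) : subw := fun n => negb (x n).
Definition emp : subw := fun _ => false.
Definition MI (I : family) (X : subw) : Prop := meager_in X (restr I X).

Lemma sub_refl x : sub_le x x. Proof. intros n h; exact h. Qed.
Lemma sub_trans x y z : sub_le x y -> sub_le y z -> sub_le x z.
Proof. intros h1 h2 n h; apply h2, h1, h. Qed.
Lemma sub_full x : sub_le x full_sub. Proof. intros n _; reflexivity. Qed.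
Lemma sub_emp x : sub_le emp x. Proof. intros n h; discriminate. Qed.
Lemma inter_l x y : sub_le (inter x y) x.
Proof. intros n h; unfold inter in h; apply andb_prop in h; tauto. Qed.
Lemma inter_r x y : sub_le (inter x y) y.
Proof. intros n h; unfold inter in h; apply andb_prop in h; tauto. Qed.
Lemma inter_glb x y z : sub_le z x -> sub_le z y -> sub_le z (inter x y).
Proof. intros h1 h2 n h; unfold inter; rewrite (h1 n h), (h2 n h); reflexivity. Qed.
Lemma union_l x y : sub_le x (union_sub x y).
Proof. intros n h; unfold union_sub; rewrite h; reflexivity. Qed.
Lemma union_r x y : sub_le y (union_sub x y).
Proof. intros n h; unfold union_sub; rewrite h; destruct (x n); reflexivity. Qed.
Lemma union_lub x y z : sub_le x z -> sub_le y z -> sub_le (union_sub x y) z.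
Proof. intros h1 h2 n h; unfold union_sub in h; destruct (x n) eqn:E; [apply h1; auto| apply h2; auto]. Qed.
Lemma finite_emp : finite_sub emp. Proof. exists 0%nat; intros; reflexivity. Qed.
Lemma finite_sub_le x y : finite_sub y -> sub_le x y -> finite_sub x.
Proof. intros [N h] hs; exists N; intros n hn; destruct (x n) eqn:E; auto.
  specialize (h n hn); rewrite (hs n E) in h; discriminate. Qed.

Lemma ideal_down I x y : is_ideal I -> I y -> sub_le x y -> I x.
Proof. intros [_ [h _]] ; eauto. Qed.
Lemma ideal_fin I x : is_ideal I -> finite_sub x -> I x.
Proof. intros [h _]; auto. Qed.
Lemma ideal_union I x y : is_ideal I -> I x -> I y -> I (union_sub x y).
Proof. intros [_ [_ [h _]]]; auto. Qed.
Lemma ideal_proper I : is_ideal I -> ~ I full_sub.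
Proof. intros [_ [_ [_ h]]]; auto. Qed.
Lemma ideal_emp I : is_ideal I -> I emp.
Proof. intros h; apply ideal_fin; auto; apply finite_emp. Qed.

Lemma meager_mono X (F G : family) : meager_in X F -> (forall f, sub_le f X -> G f -> F f) -> meager_in X G.
Proof. intros [D [h1 h2]] h; exists D; split; auto. Qed.

Lemma T_easy (X : subw) (S : nat -> Prop) (Q : nat -> subw) :
  (forall i n, exists k, (i <= k)%nat /\ S k /\ sub_le (Q k) X /\
     (forall j, Q k j = true -> (n <= j)%nat) /\ (exists m, forall j, Q k j = true -> (j < m)%nat)) ->
  meager_in X (fun f => exists i, forall k, (i <= k)%nat -> S k -> ~ sub_le (Q k) f).
Proof.
  intros H.
  exists (fun i f => forall k, (i <= k)%nat -> S k -> ~ sub_le (Q k) f). split.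
  - intros i n s. destruct (H i n) as [k [hik [hS [hX [hn [m0 hm]]]]]].
    exists (Nat.max n m0), (fun j => if Nat.ltb j n then s j else true).
    split; [lia|]. split.
    + intros k0 hk _. destruct (Nat.ltb_spec k0 n); [reflexivity|lia].
    + intros f hf hc hD. apply (hD k hik hS).
      intros j hj. pose proof (hn j hj). pose proof (hm j hj).
      rewrite (hc j ltac:(lia) (hX j hj)). destruct (Nat.ltb_spec j n); [lia|reflexivity].
  - intros f _ [i h]; exists i; exact h.
Qed.

Lemma nd_union X (A B : family) : nowhere_dense_in X A -> nowhere_dense_in X B ->
  nowhere_dense_in X (fun f => A f \/ B f).
Proof.
  intros hA hB n s. destruct (hA n s) as [m1 [t1 [h1 [h2 h3]]]].
  destruct (hB m1 t1) as [m2 [t2 [h4 [h5 h6]]]].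
  exists m2, t2. split; [lia|]. split.
  - intros k hk hX. rewrite (h5 k ltac:(lia) hX). apply h2; auto.
  - intros f hf hc [hAf|hBf].
    + apply (h3 f hf); auto. intros k hk hX. rewrite (hc k ltac:(lia) hX). apply h5; auto.
    + apply (h6 f hf); auto.
Qed.

Definition upd (s : subw) (a : nat) (b : bool) : subw := fun k => if Nat.eqb k a then b else s k.

Lemma nd_uniform X (D : family) : nowhere_dense_in X D ->
  forall a n, (a <= n)%nat -> forall s, exists m t, (n <= m)%nat /\
    (forall k, (k < n)%nat -> X k = true -> t k = s k) /\
    (forall f, sub_le f X -> (forall k, (a <= k)%nat -> (k < m)%nat -> X k = true -> f k = t k) -> ~ D f).
Proof.
  intros hD a. induction a as [|a IH]; intros n han s.
  - destruct (hD n s) as [m [t [h1 [h2 h3]]]]. exists m, t. split; auto. split; auto.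
    intros f hf hc. apply h3; auto. intros k hk hX; apply hc; auto; lia.
  - destruct (IH n ltac:(lia) (upd s a false)) as [m0 [t0 [g1 [g2 g3]]]].
    destruct (IH m0 ltac:(lia) (upd t0 a true)) as [m1 [t1 [k1 [k2 k3]]]].
    exists m1, (upd t1 a (s a)). split; [lia|]. split.
    + intros k hk hX. unfold upd. destruct (Nat.eqb_spec k a); [subst; reflexivity|].
      rewrite (k2 k ltac:(lia) hX). unfold upd. destruct (Nat.eqb_spec k a); [congruence|].
      rewrite (g2 k hk hX). unfold upd. destruct (Nat.eqb_spec k a); [congruence|reflexivity].
    + intros f hf hc. destruct (f a) eqn:Efa.
      * apply k3; auto. intros k hk1 hk2 hX. destruct (Nat.eqb_spec k a).
        -- subst. rewrite Efa. rewrite (k2 a ltac:(lia) hX). unfold upd; rewrite Nat.eqb_refl; reflexivity.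
        -- rewrite (hc k ltac:(lia) hk2 hX). unfold upd. destruct (Nat.eqb_spec k a); [congruence|reflexivity].
      * apply g3; auto. intros k hk1 hk2 hX. destruct (Nat.eqb_spec k a).
        -- subst. rewrite Efa. rewrite (g2 a ltac:(lia) hX). unfold upd; rewrite Nat.eqb_refl; reflexivity.
        -- rewrite (hc k ltac:(lia) ltac:(lia) hX). unfold upd at 1. destruct (Nat.eqb_spec k a); [congruence|].
           rewrite (k2 k hk2 hX). unfold upd. destruct (Nat.eqb_spec k a); [congruence|reflexivity].
Qed.

Open Scope nat_scope.

Lemma b_mono (b : nat -> nat) : (forall k, (b k < b (S k))%nat) -> forall k k', (k < k')%nat -> (b (S k) <= b k')%nat.
Proof. intros h k k' hk. induction hk; [lia|]. specialize (h m); lia. Qed.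
Lemma b_ge (b : nat -> nat) : (forall k, (b k < b (S k))%nat) -> forall k, (k <= b k)%nat.
Proof. intros h k; induction k; [lia|]. specialize (h k); lia. Qed.
Lemma b_uniq (b : nat -> nat) : (forall k, (b k < b (S k))%nat) -> forall k k' j,
  (b k <= j < b (S k))%nat -> (b k' <= j < b (S k'))%nat -> k = k'.
Proof. intros h k k' j h1 h2. destruct (lt_eq_lt_dec k k') as [[c|c]|c]; auto.
  - pose proof (b_mono b h k k' c); lia.
  - pose proof (b_mono b h k' k c); lia. Qed.
Lemma b_cover (b : nat -> nat) : (forall k, (b k < b (S k))%nat) -> b 0 = 0%nat -> forall j, exists k, (b k <= j < b (S k))%nat.
Proof. intros h h0 j. induction j.
  - exists 0%nat; rewrite h0; specialize (h 0%nat); lia.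
  - destruct IHj as [k hk]. destruct (Nat.eq_dec (S j) (b (S k))).
    + exists (S k). specialize (h (S k)); lia.
    + exists k; lia. Qed.

Lemma T_hard X (F : family) : (forall x y, F x -> sub_le y x -> F y) -> meager_in X F ->
 exists (b : nat -> nat) (P : nat -> subw),
   b 0 = 0%nat /\ (forall k, (b k < b (S k))%nat) /\
   (forall k j, P k j = true -> X j = true /\ (b k <= j < b (S k))%nat) /\
   (forall x, sub_le x X -> F x -> exists N, forall k, (N <= k)%nat -> ~ sub_le (P k) x).
Proof.
  intros Fdown [D [hnd hcov]].
  pose (D' := fun k f => exists i, (i <= k)%nat /\ D i f).
  assert (hnd' : forall k, nowhere_dense_in X (D' k)).
  { induction k.
    - intros n s; destruct (hnd 0%nat n s) as [m [t [h1 [h2 h3]]]]. exists m, t; repeat split; auto.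
      intros f hf hc [i [hi hDi]]. assert (i = 0%nat) by lia; subst. apply (h3 f hf hc hDi).
    - intros n s. destruct (nd_union X (D' k) (D (S k)) IHk (hnd (S k)) n s) as [m [t [h1 [h2 h3]]]].
      exists m, t; repeat split; auto. intros f hf hc [i [hi hDi]]. apply (h3 f hf hc).
      destruct (Nat.eq_dec i (S k)); [subst; right; auto| left; exists i; split; auto; lia]. }
  assert (exb : forall k n0, exists p : nat * subw, (n0 < fst p)%nat /\
     forall f, sub_le f X -> (forall j, (n0 <= j)%nat -> (j < fst p)%nat -> X j = true -> f j = snd p j) -> ~ D' k f).
  { intros k n0. destruct (nd_uniform X (D' k) (hnd' k) n0 (S n0) ltac:(lia) emp) as [m [t [h1 [h2 h3]]]].
    exists (m, t); simpl; split; [lia|]. exact h3. }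
  pose (step := fun k n0 => proj1_sig (constructive_indefinite_description _ (exb k n0))).
  assert (hstep : forall k n0, (n0 < fst (step k n0))%nat /\
     forall f, sub_le f X -> (forall j, (n0 <= j)%nat -> (j < fst (step k n0))%nat -> X j = true -> f j = snd (step k n0) j) -> ~ D' k f).
  { intros k n0; unfold step; destruct (constructive_indefinite_description _ (exb k n0)); simpl; auto. }
  pose (b := fix b k := match k with 0 => 0%nat | S k' => fst (step k' (b k')) end).
  assert (hb0 : b 0%nat = 0%nat) by reflexivity.
  assert (hbS : forall k, b (S k) = fst (step k (b k))) by reflexivity.
  assert (hbinc : forall k, (b k < b (S k))%nat). { intros k; rewrite hbS; apply hstep. }
  pose (t := fun k => snd (step k (b k))).
  exists b, (fun k j => andb (andb (t k j) (X j)) (andb (Nat.leb (b k) j) (Nat.ltb j (b (S k))))).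
  split; auto. split; auto. split.
  - intros k j h. apply andb_prop in h as [h1 h2]. apply andb_prop in h1 as [_ h1].
    apply andb_prop in h2 as [h2 h3]. apply Nat.leb_le in h2. apply Nat.ltb_lt in h3. auto.
  - intros x hxX hFx. apply NNPP; intro hno.
    assert (hinf : forall N, exists k, (N <= k)%nat /\ sub_le (fun j => andb (andb (t k j) (X j)) (andb (Nat.leb (b k) j) (Nat.ltb j (b (S k))))) x).
    { intros N. apply NNPP; intro hc. apply hno. exists N. intros k hk hs. apply hc. exists k; auto. }
    set (P := fun k j => andb (andb (t k j) (X j)) (andb (Nat.leb (b k) j) (Nat.ltb j (b (S k))))) in *.
    pose (y := fun j => dec (exists k, P k j = true /\ sub_le (P k) x)).
    assert (hyx : sub_le y x).
    { intros j hj. destruct (proj1 (dec_true _) hj) as [k [h1 h2]]. apply h2, h1. }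
    assert (hFy : F y) by (apply (Fdown x); auto).
    destruct (hcov y (sub_trans _ _ _ hyx hxX) hFy) as [i hDi].
    destruct (hinf i) as [k [hik hPk]].
    apply (proj2 (hstep k (b k)) y (sub_trans _ _ _ hyx hxX)).
    + intros j hj1 hj2 hXj. rewrite <- hbS in hj2. fold (t k).
      destruct (t k j) eqn:Etk.
      * apply dec_true. exists k. split; auto. unfold P. rewrite Etk, hXj.
        apply Nat.leb_le in hj1. apply Nat.ltb_lt in hj2. rewrite hj1, hj2. reflexivity.
      * apply dec_false. intros [k' [h1 h2]]. unfold P in h1.
        apply andb_prop in h1 as [h1 h3]. apply andb_prop in h1 as [h1 _].
        apply andb_prop in h3 as [h3 h4]. apply Nat.leb_le in h3. apply Nat.ltb_lt in h4.
        assert (k' = k) by (apply (b_uniq b hbinc k' k j); lia). subst k'. congruence.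
    + exists i; split; auto.
Qed.

Lemma easy_blocks X (b : nat -> nat) (Q : nat -> subw) (SS : nat -> Prop) :
  (forall k, b k < b (S k)) -> (forall k j, Q k j = true -> b k <= j < b (S k)) ->
  (forall k, SS k -> sub_le (Q k) X) -> (forall i, exists k, i <= k /\ SS k) ->
  meager_in X (fun f => exists i, forall k, i <= k -> SS k -> ~ sub_le (Q k) f).
Proof.
  intros hb hQ hX hS. apply T_easy. intros i n. destruct (hS (Nat.max i n)) as [k [hk hSk]].
  exists k. split; [lia|]. split; auto. split; auto. split.
  - intros j hj. pose proof (hQ k j hj). pose proof (b_ge b hb k). lia.
  - exists (b (S k)). intros j hj. apply (hQ k j hj).
Qed.

Lemma baire X (F : family) : (forall f, sub_le f X -> F f) -> ~ meager_in X F.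
Proof.
  intros h hm. destruct (T_hard X (fun f => sub_le f X)) as [b [P [_ [_ [hP hfin]]]]].
  - intros x y hx hy; eapply sub_trans; eauto.
  - eapply meager_mono; eauto.
  - destruct (hfin X (sub_refl X) (sub_refl X)) as [N hN]. apply (hN N (le_n N)).
    intros j hj; apply (hP N j hj).
Qed.

Definition downc (I : family) := forall x y, I x -> sub_le y x -> I y.
Lemma ideal_downc I : is_ideal I -> downc I.
Proof. intros h x y; apply (ideal_down I y x h). Qed.
Lemma restr_downc I X : downc I -> downc (restr I X).
Proof. intros h x y [h1 h2] h3; split; [eapply h; eauto| eapply sub_trans; eauto]. Qed.

Lemma MI_up I A B : downc I -> MI I B -> sub_le B A -> MI I A.
Proof.
  intros hI hB hBA. destruct (T_hard B (restr I B) (restr_downc I B hI) hB) as [b [P [_ [hb [hP hfin]]]]].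
  eapply meager_mono.
  - apply (easy_blocks A b P (fun _ => True) hb); auto.
    + intros k j hj; apply (hP k j hj).
    + intros k _ j hj. apply hBA, (hP k j hj).
    + intros i; exists i; auto.
  - intros f hfA [hIf _]. destruct (hfin (inter f B) (inter_r _ _)) as [N hN].
    + split; [eapply hI; eauto; apply inter_l| apply inter_r].
    + exists N. intros k hk _ hs. apply (hN k hk). apply inter_glb; auto. intros j hj; apply (hP k j hj).
Qed.

Lemma MI_mono_ideal I J X : (forall x, I x -> J x) -> MI J X -> MI I X.
Proof. intros h hm. eapply meager_mono; eauto. intros f _ [h1 h2]; split; auto. Qed.

Lemma NM I X (b : nat -> nat) (Q : nat -> subw) (SS : nat -> Prop) :
  ~ MI I X ->
  (forall k, b k < b (S k)) -> (forall k j, Q k j = true -> b k <= j < b (S k)) ->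
  (forall k, SS k -> sub_le (Q k) X) -> (forall i, exists k, i <= k /\ SS k) ->
  exists x, I x /\ sub_le x X /\ forall i, exists k, i <= k /\ SS k /\ sub_le (Q k) x.
Proof.
  intros hn hb hQ hX hS. apply NNPP; intro hc. apply hn.
  eapply meager_mono; [apply (easy_blocks X b Q SS); eauto|].
  intros f hfX [hIf _]. apply NNPP; intro hc2. apply hc. exists f. split; auto. split; auto.
  intros i. apply NNPP; intro hc3. apply hc2. exists i. intros k hk hSk hs. apply hc3. exists k; auto.
Qed.

Lemma MI_union I A B : is_ideal I -> MI I (union_sub A B) -> MI I A \/ MI I B.
Proof.
  intros hI hAB. apply NNPP; intro hc.
  assert (hA : ~ MI I A) by tauto. assert (hB : ~ MI I B) by tauto.
  destruct (T_hard _ _ (restr_downc I _ (ideal_downc I hI)) hAB) as [b [P [_ [hb [hP hfin]]]]].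
  destruct (NM I A b (fun k => inter (P k) A) (fun _ => True) hA hb) as [x1 [hx1 [hx1A hx1inf]]].
  { intros k j hj; apply (hP k j (inter_l _ _ j hj)). }
  { intros k _; apply inter_r. }
  { intros i; exists i; auto. }
  destruct (NM I B b (fun k => inter (P k) B) (fun k => sub_le (inter (P k) A) x1) hB hb) as [x2 [hx2 [hx2B hx2inf]]].
  { intros k j hj; apply (hP k j (inter_l _ _ j hj)). }
  { intros k _; apply inter_r. }
  { intros i; destruct (hx1inf i) as [k [h1 [_ h2]]]; exists k; auto. }
  destruct (hfin (union_sub x1 x2)) as [N hN].
  - apply union_lub; eapply sub_trans; eauto; [apply union_l|apply union_r].
  - split; [apply ideal_union; auto|]. apply union_lub; eapply sub_trans; eauto; [apply union_l|apply union_r].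
  - destruct (hx2inf N) as [k [hk [hk1 hk2]]]. apply (hN k hk).
    intros j hj. pose proof (proj1 (hP k j hj)) as hAB'. unfold union_sub in hAB' |- *.
    destruct (A j) eqn:EA.
    + rewrite (hk1 j); [reflexivity|]. unfold inter; rewrite hj, EA; reflexivity.
    + simpl in hAB'. rewrite (hk2 j); [destruct (x1 j); reflexivity|]. unfold inter; rewrite hj, hAB'; reflexivity.
Qed.

Lemma Phi_iff I A : Phi I A <-> ~ MI I A.
Proof. reflexivity. Qed.

Lemma ideal_in_Phi I A : is_ideal I -> I A -> Phi I A.
Proof. intros hI hA. apply baire. intros f hf; split; auto. eapply ideal_down; eauto. Qed.

Lemma meager_MI I : meager I -> MI I full_sub.
Proof. intros h; eapply meager_mono; eauto. intros f _ [h1 _]; auto. Qed.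
Lemma MI_meager I : MI I full_sub -> meager I.
Proof. intros h; eapply meager_mono; eauto. intros f _ hf; split; auto; apply sub_full. Qed.

Lemma C5 I : meager_ideal I -> hered_meager_ideal (Phi I).
Proof.
  intros [hI hm]. split; [split; [|split; [|split]]|].
  - intros A hA. apply baire. intros f hf; split; [apply ideal_fin; auto; eapply finite_sub_le; eauto| auto].
  - intros A B hB hAB hc. apply hB. eapply MI_up; eauto. apply ideal_downc; auto.
  - intros A B hA hB hc. destruct (MI_union I A B hI hc); auto.
  - intros hc. apply hc. apply meager_MI; auto.
  - intros X hX. assert (hMX : MI I X) by (apply NNPP; exact hX).
    destruct (T_hard X (restr I X) (restr_downc I X (ideal_downc I hI)) hMX) as [b [P [_ [hb [hP hfin]]]]].
    eapply meager_mono; [apply (easy_blocks X b P (fun _ => True) hb)|].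
    + intros k j hj; apply (hP k j hj).
    + intros k _ j hj; apply (hP k j hj).
    + intros i; exists i; auto.
    + intros A hAX [hPhiA _]. apply NNPP; intro hc. apply hPhiA.
      eapply meager_mono; [apply (easy_blocks A b P (fun k => sub_le (P k) A) hb)|].
      * intros k j hj; apply (hP k j hj).
      * auto.
      * intros i. apply NNPP; intro hc2. apply hc. exists i. intros k hk _ hs. apply hc2. exists k; auto.
      * intros f hfA [hIf _]. destruct (hfin f (sub_trans _ _ _ hfA hAX)) as [N hN].
        { split; auto; eapply sub_trans; eauto. }
        exists N. intros k hk _; apply hN; auto.
Qed.

Lemma C6 H : hered_meager_ideal H -> exists I, meager_ideal I /\ (forall A, Phi I A <-> H A).
Proof.
  intros [hH hher]. exists H. split.
  - split; auto. apply MI_meager. apply hher. apply ideal_proper; auto.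
  - intros A; split.
    + intros hP. apply NNPP; intro hc. apply hP, hher; auto.
    + intros hA; apply ideal_in_Phi; auto.
Qed.

Definition joinI (r J : family) : family := fun x => exists B C, r B /\ J C /\ sub_le x (union_sub B C).

Lemma finite_union x y : finite_sub x -> finite_sub y -> finite_sub (union_sub x y).
Proof. intros [N1 h1] [N2 h2]; exists (Nat.max N1 N2); intros n hn; unfold union_sub;
  rewrite (h1 n ltac:(lia)), (h2 n ltac:(lia)); reflexivity. Qed.

Lemma inter_union_sub x y z : sub_le (inter (union_sub x y) z) (union_sub (inter x z) (inter y z)).
Proof. intros n h; unfold inter, union_sub in *; destruct (x n), (y n), (z n); auto. Qed.

Lemma join_meager r J : meager_ideal r -> is_ideal J -> (forall C, J C -> ~ MI r C) ->
  meager_ideal (joinI r J) /\ ord_le (joinI r J) r /\ ord_le (joinI r J) J.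
Proof.
  intros [hr hrm] hJ hC.
  destruct (T_hard full_sub (restr r full_sub) (restr_downc r _ (ideal_downc r hr)) (meager_MI r hrm))
    as [b [P [_ [hb [hP hfin]]]]].
  assert (key : forall x, joinI r J x -> exists i, forall k, i <= k -> True -> ~ sub_le (P k) x).
  { intros x [B [C [hB [hJC hx]]]]. apply NNPP; intro hc.
    destruct (NM r C b (fun k => inter (P k) C) (fun k => sub_le (P k) x) (hC C hJC) hb) as [B' [hB' [hB'C hinf]]].
    { intros k j hj; apply (hP k j (inter_l _ _ j hj)). }
    { intros k _; apply inter_r. }
    { intros i. apply NNPP; intro hc2. apply hc. exists i. intros k hk _ hs. apply hc2; exists k; auto. }
    destruct (hfin (union_sub B B') (sub_full _)) as [N hN].
    { split; [apply ideal_union; auto| apply sub_full]. }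
    destruct (hinf N) as [k [hk [hk1 hk2]]]. apply (hN k hk).
    intros j hj. specialize (hx j (hk1 j hj)). unfold union_sub in hx |- *.
    destruct (B j); [reflexivity|]. simpl in hx. apply hk2. unfold inter; rewrite hj, hx; reflexivity. }
  assert (hm : meager (joinI r J)).
  { apply MI_meager. eapply meager_mono; [apply (easy_blocks full_sub b P (fun _ => True) hb)|].
    - intros k j hj; apply (hP k j hj).
    - intros k _; apply sub_full.
    - intros i; exists i; auto.
    - intros f _ [hf _]; apply key; auto. }
  refine (conj (conj (conj _ (conj _ (conj _ _))) hm) (conj _ _)).
  - intros A hA. exists A, emp. repeat split; [apply ideal_fin; auto| apply ideal_emp; auto| apply union_l].
  - intros A B [B0 [C0 [h1 [h2 h3]]]] hAB. exists B0, C0; repeat split; auto. eapply sub_trans; eauto.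
  - intros A B [B1 [C1 [h1 [h2 h3]]]] [B2 [C2 [h4 [h5 h6]]]].
    exists (union_sub B1 B2), (union_sub C1 C2). split; [apply ideal_union; auto|]. split; [apply ideal_union; auto|].
    intros n hn. unfold union_sub in *. destruct (A n) eqn:EA.
    + specialize (h3 n EA). simpl in h3. destruct (B1 n), (C1 n), (B2 n), (C2 n); simpl in *; auto.
    + simpl in hn. specialize (h6 n hn). simpl in h6. destruct (B1 n), (C1 n), (B2 n), (C2 n); simpl in *; auto.
  - intros hfull. destruct (key full_sub hfull) as [i hi]. apply (hi i (le_n i) I). apply sub_full.
  - intros A hA. exists A, emp. repeat split; auto; [apply ideal_emp; auto| apply union_l].
  - intros A hA. exists emp, A. repeat split; auto; [apply ideal_emp; auto| apply union_r].
Qed.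

Definition interI (I : family) (A : subw) : family := fun x => I (inter x A).

Lemma C8 I J : meager_ideal I -> meager_ideal J -> (ord_le (Phi I) (Phi J) <-> sq_le meager_ideal I J).
Proof.
  intros [hI hIm] [hJ hJm]. split.
  - intros hle r hr hrI. destruct (join_meager r J hr hJ) as [h1 [h2 h3]].
    + intros C hJC hc. apply (hle C (ideal_in_Phi J C hJ hJC)).
      eapply meager_mono; eauto. intros f _ [h4 h5]; split; auto.
    + exists (joinI r J); auto.
  - intros hsq A hPJ. apply NNPP; intro hPI. assert (hMA : MI I A) by (apply NNPP; exact hPI).
    destruct (T_hard A (restr I A) (restr_downc I A (ideal_downc I hI)) hMA) as [b [P [_ [hb [hP hfin]]]]].
    assert (hr : meager_ideal (interI I A)).
    { refine (conj (conj _ (conj _ (conj _ _))) _).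
      - intros x hx; unfold interI; apply (ideal_fin I); auto. eapply finite_sub_le; eauto; apply inter_l.
      - intros x y hy hxy. unfold interI in *; eapply (ideal_down I); eauto. apply inter_glb; [eapply sub_trans; [apply inter_l|auto]|apply inter_r].
      - intros x y hx hy. unfold interI in *; eapply (ideal_down I); [auto| apply (ideal_union I _ _ hI hx hy)| apply inter_union_sub].
      - intros hc. apply hPI. apply (ideal_in_Phi I A hI). eapply (ideal_down I); [exact hI| exact hc|]. apply inter_glb; [apply sub_full| apply sub_refl].
      - apply MI_meager. eapply meager_mono; [apply (easy_blocks full_sub b P (fun _ => True) hb)|].
        + intros k j hj; apply (hP k j hj).
        + intros k _; apply sub_full.
        + intros i; exists i; auto.
        + intros f _ [hf _]. destruct (hfin (inter f A) (inter_r _ _)) as [N hN]; [split; auto; apply inter_r|].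
          exists N. intros k hk _ hs. apply (hN k hk). apply inter_glb; auto. intros j hj; apply (hP k j hj). }
    destruct (hsq (interI I A) hr) as [K [[hK hKm] [hKr hKJ]]].
    { intros x hx. unfold interI. eapply (ideal_down I); [exact hI| exact hx| apply inter_l]. }
    assert (hKc : K (compl A)).
    { apply hKr. unfold interI. eapply ideal_down; [auto| apply (ideal_emp I hI)|].
      intros n hn; unfold inter, compl in hn. destruct (A n); discriminate. }
    destruct (T_hard full_sub (restr K full_sub) (restr_downc K _ (ideal_downc K hK)) (meager_MI K hKm))
      as [b' [P' [_ [hb' [hP' hfin']]]]].
    destruct (NM J A b' (fun k => inter (P' k) A) (fun _ => True) hPJ hb') as [x [hx [hxA hinf]]].
    { intros k j hj; apply (hP' k j (inter_l _ _ j hj)). }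
    { intros k _; apply inter_r. }
    { intros i; exists i; auto. }
    destruct (hfin' (union_sub x (compl A)) (sub_full _)) as [N hN].
    { split; [apply ideal_union; auto| apply sub_full]. }
    destruct (hinf N) as [k [hk [_ hk2]]]. apply (hN k hk). intros j hj. unfold union_sub, compl.
    destruct (A j) eqn:EA; [|destruct (x j); reflexivity].
    rewrite (hk2 j); [reflexivity|]. unfold inter; rewrite hj, EA; reflexivity.
Qed.

Lemma C7 I J : meager_ideal I -> meager_ideal J ->
  ((forall A, Phi I A <-> Phi J A) <-> sq_equiv meager_ideal I J).
Proof.
  intros hI hJ. pose proof (C8 I J hI hJ) as e1. pose proof (C8 J I hJ hI) as e2. split.
  - intros he. assert (s1 : sq_le meager_ideal I J) by (apply e1; intros A hA; apply he; auto).
    assert (s2 : sq_le meager_ideal J I) by (apply e2; intros A hA; apply he; auto).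
    intros r hr. split.
    + intros hn [K [hK [hKr hKJ]]]. apply hn. destruct (s2 K hK hKJ) as [K' [hK' [h1 h2]]].
      exists K'; split; [exact hK'|]; split; [intros A hA; apply h1, hKr, hA| exact h2].
    + intros hn [K [hK [hKr hKI]]]. apply hn. destruct (s1 K hK hKI) as [K' [hK' [h1 h2]]].
      exists K'; split; [exact hK'|]; split; [intros A hA; apply h1, hKr, hA| exact h2].
  - intros hsq. assert (s1 : sq_le meager_ideal I J).
    { intros r hr hrI. apply NNPP. intros hc. apply (proj2 (hsq r hr) hc).
      exists r; split; [exact hr|]; split; [intros A hA; exact hA| exact hrI]. }
    assert (s2 : sq_le meager_ideal J I).
    { intros r hr hrJ. apply NNPP. intros hc. apply (proj1 (hsq r hr) hc).
      exists r; split; [exact hr|]; split; [intros A hA; exact hA| exact hrJ]. }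
    apply e1 in s1. apply e2 in s2. intros A; split; [apply s2| apply s1].
Qed.

Lemma interI_meager_ideal I (b : nat -> nat) (P : nat -> subw) W :
  is_ideal I -> (forall k, b k < b (S k)) -> (forall k j, P k j = true -> b k <= j < b (S k)) ->
  (forall x, sub_le x full_sub -> restr I full_sub x -> exists N, forall k, N <= k -> ~ sub_le (P k) x) ->
  (forall i, exists k, i <= k /\ sub_le (P k) W) ->
  meager_ideal (interI I W).
Proof.
  intros hI hb hP hfin hW. refine (conj (conj _ (conj _ (conj _ _))) _).
  - intros x hx; unfold interI; apply (ideal_fin I); auto. eapply finite_sub_le; eauto; apply inter_l.
  - intros x y hy hxy. unfold interI in *; eapply (ideal_down I); eauto. apply inter_glb; [eapply sub_trans; [apply inter_l|auto]|apply inter_r].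
  - intros x y hx hy. unfold interI in *; eapply (ideal_down I); [auto| apply (ideal_union I _ _ hI hx hy)| apply inter_union_sub].
  - intros hc. destruct (hfin (inter full_sub W) (sub_full _)) as [N hN]; [split; auto; apply sub_full|].
    destruct (hW N) as [k [hk hkW]]. apply (hN k hk). apply inter_glb; auto; apply sub_full.
  - apply MI_meager. eapply meager_mono; [apply (easy_blocks full_sub b P (fun k => sub_le (P k) W) hb)|]; auto.
    + intros k _; apply sub_full.
    + intros f _ [hf _]. destruct (hfin (inter f W) (sub_full _)) as [N hN]; [split; auto; apply sub_full|].
      exists N. intros k hk hkW hs. apply (hN k hk). apply inter_glb; auto.
Qed.

Lemma split_meager I : meager_ideal I -> exists Z, meager_ideal (interI I (compl Z)) /\ meager_ideal (interI I Z).
Proof.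
  intros [hI hIm].
  destruct (T_hard full_sub (restr I full_sub) (restr_downc I _ (ideal_downc I hI)) (meager_MI I hIm))
    as [b [P [_ [hb [hP hfin]]]]].
  pose (E := fun i => dec (exists j, b (2*j) <= i < b (S (2*j)))).
  exists E. split.
  - apply (interI_meager_ideal I b P); auto.
    + intros k j hj; apply (hP k j hj).
    + intros i. exists (S (2*i)). split; [lia|]. intros j hj. unfold compl.
      destruct (E j) eqn:EE; [|reflexivity]. destruct (proj1 (dec_true _) EE) as [j' hj'].
      pose proof (proj2 (hP _ j hj)). pose proof (b_uniq b hb _ _ j H hj'). lia.
  - apply (interI_meager_ideal I b P); auto.
    + intros k j hj; apply (hP k j hj).
    + intros i. exists (2*i). split; [lia|]. intros j hj. unfold E. apply (proj2 (dec_true _)). exists i. apply (hP _ j hj).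
Qed.

Lemma no_full_union (L : family) Z : is_ideal L -> L Z -> L (compl Z) -> False.
Proof. intros hL h1 h2. apply (ideal_proper L hL). eapply ideal_down; [auto| apply (ideal_union L _ _ hL h1 h2)|].
  intros n _; unfold union_sub, compl; destruct (Z n); reflexivity. Qed.

Lemma C1 : atomless meager_ideal.
Proof.
  intros I hI. destruct (split_meager I hI) as [Z [hJ hK]].
  exists (interI I (compl Z)), (interI I Z). split; [exact hJ|]. split; [exact hK|]. split; [|split].
  - intros x hx; unfold interI; eapply (ideal_down I); [apply hI| eauto| apply inter_l].
  - intros x hx; unfold interI; eapply (ideal_down I); [apply hI| eauto| apply inter_l].
  - intros [L [[hL _] [h1 h2]]]. apply (no_full_union L Z hL).
    + apply h1. unfold interI. apply (ideal_down I _ emp (proj1 hI) (ideal_emp I (proj1 hI))).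
      intros n hn; unfold inter, compl in hn; destruct (Z n); discriminate.
    + apply h2. unfold interI. apply (ideal_down I _ emp (proj1 hI) (ideal_emp I (proj1 hI))).
      intros n hn; unfold inter, compl in hn; destruct (Z n); discriminate.
Qed.

Lemma max_not_meager M : is_ideal M -> (forall x, M x \/ M (compl x)) -> ~ meager M.
Proof.
  intros hM hmax hm. destruct (split_meager M (conj hM hm)) as [Z [[hJ _] [hK _]]].
  assert (e1 : interI M Z (compl Z)).
  { unfold interI; apply (ideal_down M _ emp hM (ideal_emp M hM)). intros n hn; unfold inter, compl in hn; destruct (Z n); discriminate. }
  assert (e2 : interI M (compl Z) Z).
  { unfold interI; apply (ideal_down M _ emp hM (ideal_emp M hM)). intros n hn; unfold inter, compl in hn; destruct (Z n); discriminate. }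
  destruct (hmax Z) as [h|h].
  - apply (no_full_union _ Z hK); auto. unfold interI; eapply (ideal_down M); [exact hM| exact h| apply inter_l].
  - apply (no_full_union _ Z hJ); auto. unfold interI; eapply (ideal_down M); [exact hM| exact h| apply inter_l].
Qed.

Definition odds : subw := fun n => Nat.odd n.
Definition evens : subw := fun n => Nat.even n.
Lemma evens_compl : evens = compl odds.
Proof. apply functional_extensionality; intros n; unfold evens, compl, odds. rewrite <- Nat.negb_odd; reflexivity. Qed.

Lemma odds_infinite : ~ finite_sub odds.
Proof. intros [N h]. specialize (h (S (2*N)) ltac:(lia)). unfold odds in h.
  rewrite Nat.odd_succ, Nat.even_mul in h. discriminate. Qed.

Lemma max_ideal_exists : exists M, is_ideal M /\ M odds /\ forall x, M x \/ M (compl x).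
Proof.
  pose (P := fun X : family => (forall x, ~ X x) \/ (is_ideal X /\ X odds)).
  destruct (@classical_sets.Zorn_bigcup subw P) as [A [hPA hmax]].
  - intros F hFP htot.
    destruct (classic (exists X, F X /\ exists x, X x)) as [[X0 [hX0 [x0 hx0]]]|hno].
    + right. assert (hX0I : is_ideal X0 /\ X0 odds).
      { destruct (hFP X0 hX0) as [h|h]; [exfalso; apply (h x0 hx0)| exact h]. }
      assert (memI : forall X a, F X -> X a -> is_ideal X).
      { intros X a hX ha. destruct (hFP X hX) as [h|h]; [exfalso; apply (h a ha)| apply h]. }
      split; [refine (conj _ (conj _ (conj _ _)))|].
      * intros a ha. exists X0; auto. apply ideal_fin; auto. apply hX0I.
      * intros a c [X hX hc] hac. exists X; auto. apply (ideal_down X a c (memI X c hX hc) hc hac).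
      * intros a c [X hX ha] [Y hY hc]. destruct (htot X Y hX hY) as [hXY|hYX].
        -- exists Y; auto. apply ideal_union; [apply (memI Y c hY hc)| apply hXY; auto| auto].
        -- exists X; auto. apply ideal_union; [apply (memI X a hX ha)| auto| apply hYX; auto].
      * intros [X hX hf]. apply (ideal_proper X (memI X _ hX hf) hf).
      * exists X0; auto. apply hX0I.
    + left. intros x [X hX hx]. apply hno. exists X; split; auto. exists x; auto.
  - assert (hAI : is_ideal A /\ A odds).
    { destruct hPA as [hemp|h]; auto. exfalso.
      apply (hmax (fun x => finite_sub (inter x evens))).
      - split; [intros t ht; exfalso; apply (hemp t ht)|].
        intros hc. apply (hemp odds). apply hc. exists 0. intros n hn. unfold inter, evens, odds.
        rewrite <- Nat.negb_odd. destruct (Nat.odd n); reflexivity.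
      - right. split; [refine (conj _ (conj _ (conj _ _)))|].
        + intros x hx; eapply finite_sub_le; eauto; apply inter_l.
        + intros x y hy hxy. eapply finite_sub_le; eauto. apply inter_glb; [eapply sub_trans; [apply inter_l| auto]| apply inter_r].
        + intros x y hx hy. eapply finite_sub_le; [apply (finite_union _ _ hx hy)| apply inter_union_sub].
        + intros hc. apply odds_infinite.
          destruct hc as [N h]. exfalso. specialize (h (2*N) ltac:(lia)). unfold inter, evens, full_sub in h.
          rewrite Nat.even_mul in h. discriminate.
        + exists 0. intros n hn. unfold inter, evens, odds.
          rewrite <- Nat.negb_odd. destruct (Nat.odd n); reflexivity. }
    destruct hAI as [hA hAo]. exists A. split; auto. split; auto.
    intros x. apply NNPP; intro hc.
    apply (hmax (fun y => exists a, A a /\ sub_le y (union_sub a x))).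
    + split.
      * intros y hy. exists y. split; auto. apply union_l.
      * intros hsub. apply hc. left. apply hsub. exists emp. split; [apply ideal_emp; auto| apply union_r].
    + right. split; [refine (conj _ (conj _ (conj _ _)))|].
      * intros y hy. exists y; split; [apply ideal_fin; auto| apply union_l].
      * intros y z [a [ha hza]] hyz. exists a; split; auto. eapply sub_trans; eauto.
      * intros y z [a [ha hya]] [c [hc' hzc]]. exists (union_sub a c). split; [apply ideal_union; auto|].
        intros n hn. unfold union_sub in *. destruct (y n) eqn:Ey.
        -- specialize (hya n Ey). simpl in hya. destruct (a n), (c n), (x n); simpl in *; auto.
        -- simpl in hn. specialize (hzc n hn). simpl in hzc. destruct (a n), (c n), (x n); simpl in *; auto.
      * intros [a [ha hfa]]. apply hc. right. eapply (ideal_down A); [exact hA| exact ha|].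
        intros n hn. specialize (hfa n eq_refl). unfold compl, union_sub in *. destruct (x n), (a n); simpl in *; auto.
      * exists odds. split; auto. apply union_l.
Qed.

Lemma evens_odds_disj x : sub_le x evens -> sub_le (inter x odds) emp.
Proof. intros h n hn. unfold inter in hn. apply andb_prop in hn as [h1 h2]. specialize (h n h1).
  unfold evens, odds in *. rewrite <- Nat.negb_odd in h. rewrite h2 in h. discriminate. Qed.

Definition qI : family := fun x => finite_sub (inter x odds).

Lemma qI_meager_ideal : meager_ideal qI.
Proof.
  refine (conj (conj _ (conj _ (conj _ _))) _).
  - intros x hx. unfold qI. eapply finite_sub_le; eauto; apply inter_l.
  - intros x y hy hxy. unfold qI in *. eapply finite_sub_le; eauto. apply inter_glb; [eapply sub_trans; [apply inter_l| auto]| apply inter_r].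
  - intros x y hx hy. unfold qI in *. eapply finite_sub_le; [apply (finite_union _ _ hx hy)| apply inter_union_sub].
  - intros hc. apply odds_infinite. eapply finite_sub_le; eauto. apply inter_glb; [apply sub_full| apply sub_refl].
  - apply MI_meager. eapply meager_mono; [apply (easy_blocks full_sub (fun k => k) (fun k j => Nat.eqb j k) (fun k => odds k = true))|].
    + intros k; lia.
    + intros k j hj. apply Nat.eqb_eq in hj; lia.
    + intros k _; apply sub_full.
    + intros i. exists (S (2*i)). split; [lia|]. unfold odds. rewrite Nat.odd_succ, Nat.even_mul. reflexivity.
    + intros f _ [[N hN] _]. exists N. intros k hk hok hs. specialize (hN k hk). unfold inter in hN.
      rewrite (hs k (Nat.eqb_refl k)), hok in hN. discriminate.
Qed.

Lemma C2 : ~ separative meager_ideal.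
Proof.
  intros hsep. destruct max_ideal_exists as [M [hM [hMo hmax]]].
  pose (p := fun x => M x /\ qI x).
  destruct qI_meager_ideal as [hq hqm].
  assert (hp : meager_ideal p).
  { refine (conj (conj _ (conj _ (conj _ _))) _).
    - intros x hx; split; [apply ideal_fin; auto| apply hq; auto].
    - intros x y [h1 h2] hxy; split; [eapply (ideal_down M); eauto| eapply (ideal_down qI); eauto].
    - intros x y [h1 h2] [h3 h4]; split; [apply ideal_union; auto| apply (ideal_union qI); auto].
    - intros [h _]. apply (ideal_proper M hM h).
    - eapply meager_mono; eauto. intros f _ [_ h]; exact h. }
  destruct (hsep p qI hp (conj hq hqm)) as [r [hr [hrp hnc]]].
  - intros hle. assert (hev : p evens) by (apply hle; unfold qI; eapply finite_sub_le; [apply finite_emp| apply evens_odds_disj, sub_refl]).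
    destruct hev as [hev _]. apply (no_full_union M odds hM hMo). rewrite <- evens_compl; exact hev.
  - apply hnc. destruct (join_meager r qI hr hq) as [h1 [h2 h3]].
    + intros C hqC hMr.
      assert (hU : MI r (union_sub (inter C evens) (inter C odds))).
      { eapply MI_up; [apply ideal_downc, hr| exact hMr|]. intros n hn. unfold union_sub, inter, evens, odds.
        rewrite hn. rewrite <- Nat.negb_odd. destruct (Nat.odd n); reflexivity. }
      destruct (MI_union r _ _ (proj1 hr) hU) as [hE|hO].
      * assert (hMe : MI r evens) by (eapply MI_up; [apply ideal_downc, hr| exact hE| apply inter_r]).
        assert (hMM : MI M evens).
        { eapply meager_mono; [exact hMe|]. intros f hf [hMf _]. split; auto. apply hrp. split; auto.
          unfold qI. eapply finite_sub_le; [apply finite_emp| apply evens_odds_disj; auto]. }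
        apply (max_not_meager M hM hmax). apply MI_meager. eapply MI_up; [apply ideal_downc, hM| exact hMM| apply sub_full].
      * apply (baire (inter C odds) (restr r (inter C odds))); [|exact hO]. intros f hf. split; auto. apply ideal_fin; [apply hr|].
        eapply finite_sub_le; [|exact hf]. eapply finite_sub_le; [exact hqC| apply inter_glb; [apply inter_l| apply inter_r]].
    + exists (joinI r qI); auto.
Qed.

Open Scope R_scope.

Definition gcyl := (nat * subw * subw)%type.
Definition gL (g : gcyl) : nat := fst (fst g).
Definition gm (g : gcyl) : subw := snd (fst g).
Definition gs (g : gcyl) : subw := snd g.
Definition gin (g : gcyl) (x : subw) : Prop := forall k, (k < gL g)%nat -> gm g k = true -> x k = gs g k.
Fixpoint cnt (L : nat) (m : subw) : nat := match L with 0 => 0%nat | S L' => (cnt L' m + (if m L' then 1 else 0))%nat end.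
Definition gw (g : gcyl) : R := (/2)^(cnt (gL g) (gm g)).
Definition wl (l : list gcyl) : R := fold_right (fun g a => gw g + a) 0 l.
Fixpoint sumR (n : nat) (f : nat -> R) : R := match n with 0 => 0 | S n' => sumR n' f + f n' end.
Definition cover := nat -> list gcyl.
Definition covers (c : cover) (F : family) := forall x, F x -> exists n g, In g (c n) /\ gin g x.
Definition cwt (c : cover) (N : nat) : R := sumR N (fun n => wl (c n)).
Definition gnull (F : family) := forall eps, 0 < eps -> exists c, covers c F /\ forall N, cwt c N <= eps.

Lemma half_pow_pos n : 0 < (/2)^n. Proof. apply pow_lt; lra. Qed.
Lemma half_pow_le1 n : (/2)^n <= 1. Proof. induction n; simpl; [lra|]. pose proof (half_pow_pos n); lra. Qed.
Lemma gw_pos g : 0 < gw g. Proof. apply half_pow_pos. Qed.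
Lemma wl_app l1 l2 : wl (l1 ++ l2) = wl l1 + wl l2.
Proof. induction l1; simpl; [lra|]. rewrite IHl1; lra. Qed.
Lemma wl_nonneg l : 0 <= wl l.
Proof. induction l; simpl; [lra|]. pose proof (gw_pos a); lra. Qed.
Lemma sumR_ext n f g : (forall i, (i < n)%nat -> f i = g i) -> sumR n f = sumR n g.
Proof. induction n; intros h; simpl; auto. rewrite IHn; [rewrite h; auto|intros; apply h; lia]. Qed.
Lemma sumR_le n f g : (forall i, (i < n)%nat -> f i <= g i) -> sumR n f <= sumR n g.
Proof. induction n; intros h; simpl; [lra|]. pose proof (IHn ltac:(intros; apply h; lia)). pose proof (h n ltac:(lia)). lra. Qed.
Lemma sumR_nonneg n f : (forall i, 0 <= f i) -> 0 <= sumR n f.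
Proof. induction n; intros h; simpl; [lra|]. pose proof (IHn h); pose proof (h n); lra. Qed.
Lemma sumR_plus n f g : sumR n (fun i => f i + g i) = sumR n f + sumR n g.
Proof. induction n; simpl; [lra|]. rewrite IHn; lra. Qed.
Lemma sumR_scal n c f : sumR n (fun i => c * f i) = c * sumR n f.
Proof. induction n; simpl; [lra|]. rewrite IHn; lra. Qed.
Lemma sumR_mono n n' f : (forall i, 0 <= f i) -> (n <= n')%nat -> sumR n f <= sumR n' f.
Proof. intros h hn. induction hn; [lra|]. simpl. pose proof (h m); lra. Qed.
Lemma sumR_geom n eps : sumR n (fun j => (/2)^(S j) * eps) = eps * (1 - (/2)^n).
Proof. induction n; [simpl; lra|]. change (sumR (S n) ?f) with (sumR n f + f n). rewrite IHn. simpl. lra. Qed.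
Lemma cwt_nonneg c N : 0 <= cwt c N.
Proof. apply sumR_nonneg; intros; apply wl_nonneg. Qed.
Lemma cwt_mono c N N' : (N <= N')%nat -> cwt c N <= cwt c N'.
Proof. intros; apply sumR_mono; auto; intros; apply wl_nonneg. Qed.

Lemma gnull_sub F G : gnull G -> (forall x, F x -> G x) -> gnull F.
Proof. intros hG h eps he. destruct (hG eps he) as [c [h1 h2]]. exists c; split; auto.
  intros x hx; apply h1, h, hx. Qed.

Lemma gnull_union2 F G : gnull F -> gnull G -> gnull (fun x => F x \/ G x).
Proof.
  intros hF hG eps he. destruct (hF (eps/2) ltac:(lra)) as [c1 [h1 h2]].
  destruct (hG (eps/2) ltac:(lra)) as [c2 [h3 h4]].
  exists (fun n => c1 n ++ c2 n). split.
  - intros x [hx|hx]; [destruct (h1 x hx) as [n [g [hi hg]]]| destruct (h3 x hx) as [n [g [hi hg]]]];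
      exists n, g; split; auto; apply in_or_app; auto.
  - intros N. unfold cwt. rewrite (sumR_ext N _ (fun n => wl (c1 n) + wl (c2 n))).
    + rewrite sumR_plus. specialize (h2 N); specialize (h4 N); unfold cwt in *; lra.
    + intros; apply wl_app.
Qed.

Lemma wl_flat_map (f : nat -> list gcyl) n : wl (flat_map f (seq 0 n)) = sumR n (fun j => wl (f j)).
Proof. induction n; [reflexivity|]. rewrite seq_S, flat_map_app, wl_app, IHn. simpl flat_map. rewrite app_nil_r. reflexivity. Qed.

Lemma gnull_countable (F : nat -> family) : (forall j, gnull (F j)) -> gnull (fun x => exists j, F j x).
Proof.
  intros hF eps he.
  assert (ex : forall j, exists c, covers c (F j) /\ forall N, cwt c N <= (/2)^(S j) * eps).
  { intros j. apply hF. pose proof (half_pow_pos (S j)). nra. }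
  pose (c := fun j => proj1_sig (constructive_indefinite_description _ (ex j))).
  assert (hc : forall j, covers (c j) (F j) /\ forall N, cwt (c j) N <= (/2)^(S j) * eps).
  { intros j; unfold c; destruct (constructive_indefinite_description _ (ex j)); auto. }
  exists (fun n => flat_map (fun j => c j (n - j)%nat) (seq 0 (S n))). split.
  - intros x [j hx]. destruct (proj1 (hc j) x hx) as [n [g [hi hg]]]. exists (n + j)%nat, g. split; auto.
    apply in_flat_map. exists j. split; [apply in_seq; lia|]. replace (n + j - j)%nat with n by lia; auto.
  - assert (key : forall N, cwt (fun n => flat_map (fun j => c j (n - j)%nat) (seq 0 (S n))) N = sumR N (fun j => cwt (c j) (N - j))).
    { induction N; [reflexivity|]. change (cwt ?cc (S N)) with (cwt cc N + wl (cc N)).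
      rewrite IHN. cbv beta. rewrite wl_flat_map.
      transitivity (sumR (S N) (fun j => cwt (c j) (N - j)) + sumR (S N) (fun j => wl (c j (N - j)%nat))).
      - change (sumR (S N) ?f) with (sumR N f + f N). cbv beta. rewrite Nat.sub_diag. assert (cwt (c N) 0 = 0) as -> by reflexivity. ring.
      - rewrite <- sumR_plus. apply sumR_ext. intros i hi. replace (S N - i)%nat with (S (N - i)) by lia.
        unfold cwt; simpl; reflexivity. }
    intros N. rewrite key. apply Rle_trans with (sumR N (fun j => (/2)^(S j) * eps)).
    + apply sumR_le. intros i _. apply hc.
    + rewrite sumR_geom. pose proof (half_pow_pos N). nra.
Qed.

Definition std (n : nat) (s : subw) : gcyl := (n, full_sub, s).
Lemma cnt_full n : cnt n full_sub = n.
Proof. induction n; simpl; auto. rewrite IHn; unfold full_sub; lia. Qed.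
Lemma gw_std n s : gw (std n s) = (/2)^n.
Proof. unfold gw, std, gL, gm; simpl. rewrite cnt_full; auto. Qed.
Lemma gin_std n s x : gin (std n s) x <-> forall k, (k < n)%nat -> x k = s k.
Proof. unfold gin, std, gL, gm, gs; simpl; split; intros h k hk; auto. Qed.
Lemma wl_map_std L ts : wl (map (std L) ts) = INR (length ts) * (/2)^L.
Proof. induction ts; simpl; [lra|]. rewrite IHts, gw_std. destruct (length ts); simpl; lra. Qed.

Lemma gin_restrict L m s x : gin (S L, m, s) x -> gin (L, m, s) x.
Proof. unfold gin, gL, gm, gs; simpl; intros h k hk hm; apply h; auto. Qed.
Lemma gin_last L m s x : gin (S L, m, s) x -> m L = true -> x L = s L.
Proof. unfold gin, gL, gm, gs; simpl; intros h hm; apply h; auto. Qed.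

Lemma gen_std g : exists ts : list subw, (forall x, gin g x -> exists t, In t ts /\ gin (std (gL g) t) x) /\
   INR (length ts) * (/2)^(gL g) = gw g.
Proof.
  destruct g as [[L m] s]. unfold gL, gw, gm; simpl. revert m s. induction L; intros m s.
  - exists [s]. split.
    + intros x _; exists s; split; [left; auto|]. apply (proj2 (gin_std _ _ _)); intros; lia.
    + simpl; lra.
  - destruct (IHL m s) as [ts [hc hw]].
    destruct (m L) eqn:EmL.
    + exists (map (fun t => upd t L (s L)) ts). split.
      * intros x hx. destruct (hc x) as [t [ht hxt]].
        { apply gin_restrict; auto. }
        exists (upd t L (s L)). split; [apply (in_map (fun t => upd t L (s L))); auto|]. apply (proj2 (gin_std _ _ _)). intros k hk. unfold upd.
        destruct (Nat.eqb_spec k L); [subst; apply (gin_last L m s); auto|]. rewrite gin_std in hxt. apply hxt; lia.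
      * rewrite length_map. unfold gL in *; simpl in *. rewrite EmL. rewrite pow_add. simpl. rewrite <- hw. lra.
    + exists (flat_map (fun t => [upd t L false; upd t L true]) ts). split.
      * intros x hx. destruct (hc x) as [t [ht hxt]].
        { apply gin_restrict; auto. }
        exists (upd t L (x L)). split.
        -- apply in_flat_map. exists t; split; auto. destruct (x L); simpl; auto.
        -- apply (proj2 (gin_std _ _ _)). intros k hk. unfold upd. destruct (Nat.eqb_spec k L); [subst; auto|]. rewrite gin_std in hxt. apply hxt; lia.
      * assert (hl : forall l : list subw, length (flat_map (fun t => [upd t L false; upd t L true]) l) = (2 * length l)%nat).
        { induction l; simpl; auto. rewrite IHl. lia. }
        rewrite hl. unfold gL in *; simpl in *. rewrite EmL, Nat.add_0_r. rewrite Nat.add_0_r. rewrite <- hw. rewrite plus_INR. lra.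
Qed.

Definition stdcover (c : cover) := forall n g, In g (c n) -> gm g = full_sub.

Lemma gnull_std F : gnull F -> forall eps, 0 < eps -> exists c, stdcover c /\ covers c F /\ forall N, cwt c N <= eps.
Proof.
  intros hF eps he. destruct (hF eps he) as [c [hc hw]].
  pose (tsf := fun g => proj1_sig (constructive_indefinite_description _ (gen_std g))).
  assert (htsf : forall g, (forall x, gin g x -> exists t, In t (tsf g) /\ gin (std (gL g) t) x) /\
     INR (length (tsf g)) * (/2)^(gL g) = gw g).
  { intros g; unfold tsf; destruct (constructive_indefinite_description _ (gen_std g)); auto. }
  exists (fun n => flat_map (fun g => map (std (gL g)) (tsf g)) (c n)). split; [|split].
  - intros n g hg. apply in_flat_map in hg as [g' [_ hg]]. apply in_map_iff in hg as [t [<- _]]. reflexivity.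
  - intros x hx. destruct (hc x hx) as [n [g [hg hgx]]]. destruct (proj1 (htsf g) x hgx) as [t [ht hxt]].
    exists n, (std (gL g) t). split; auto. apply in_flat_map. exists g; split; auto. apply in_map; auto.
  - intros N. apply Rle_trans with (cwt c N); auto.
    unfold cwt. apply Req_le, sumR_ext. intros i _. generalize (c i). induction l; simpl; auto.
    rewrite wl_app, IHl, wl_map_std, (proj2 (htsf a)). reflexivity.
Qed.

Fixpoint sumN (n : nat) (f : nat -> nat) : nat := match n with 0 => 0%nat | S n' => (sumN n' f + f n')%nat end.

Lemma sumR_split a b f : sumR (a + b) f = sumR a f + sumR b (fun j => f (a + j)%nat).
Proof. induction b; simpl; [rewrite Nat.add_0_r; lra|]. rewrite Nat.add_succ_r. simpl. rewrite IHb. lra. Qed.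

Lemma sumN_shift k f : sumN (S k) f = (f 0%nat + sumN k (fun m => f (S m)))%nat.
Proof. induction k; simpl in *; lia. Qed.

Lemma wl_nth l : sumR (length l) (fun j => gw (nth j l (std 0 emp))) = wl l.
Proof. induction l; [reflexivity|]. cbn [length].
  replace (S (length l)) with (1 + length l)%nat by lia. rewrite sumR_split.
  change (wl (a :: l)) with (gw a + wl l). rewrite <- IHl. simpl. lra. Qed.

Lemma flatten (d : nat -> list gcyl) : (forall n, d n <> []) ->
  exists e : nat -> gcyl, (forall n g, In g (d n) -> exists i, e i = g) /\
    (forall i, exists n, In (e i) (d n)) /\
    (forall K, sumR K (fun i => gw (e i)) <= sumR K (fun n => wl (d n))).
Proof.
  intros hne.
  pose (dflt := std 0 emp).
  pose (go := fix go (n i fuel : nat) : gcyl := match fuel with 0%nat => dflt | S fu =>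
          if Nat.ltb i (length (d n)) then nth i (d n) dflt else go (S n) (i - length (d n))%nat fu end).
  assert (hgo : forall k n0 j fuel, (j < length (d (n0 + k)))%nat -> (k < fuel)%nat ->
     go n0 (sumN k (fun m => length (d (n0 + m)%nat)) + j)%nat fuel = nth j (d (n0 + k)%nat) dflt).
  { induction k; intros n0 j fuel hj hf.
    - destruct fuel; [lia|]. simpl. rewrite Nat.add_0_r in hj |- *. apply Nat.ltb_lt in hj. rewrite hj. reflexivity.
    - destruct fuel; [lia|]. cbn [go]. rewrite sumN_shift. rewrite Nat.add_0_r.
      destruct (Nat.ltb_spec (length (d n0) + sumN k (fun m => length (d (n0 + S m)%nat)) + j) (length (d n0))); [lia|].
      replace (length (d n0) + sumN k (fun m => length (d (n0 + S m)%nat)) + j - length (d n0))%nat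
        with (sumN k (fun m => length (d (S n0 + m)%nat)) + j)%nat.
      + rewrite (IHk (S n0) j fuel); [f_equal; f_equal; lia| replace (S n0 + k)%nat with (n0 + S k)%nat by lia; auto| lia].
      + assert (sumN k (fun m => length (d (n0 + S m)%nat)) = sumN k (fun m => length (d (S n0 + m)%nat))).
        { clear. induction k; simpl; auto. rewrite IHk. replace (n0 + S k)%nat with (S n0 + k)%nat by lia. auto. }
        lia. }
  pose (cum := fun k => sumN k (fun m => length (d m))).
  assert (hcum : forall k, (k <= cum k)%nat).
  { intros k; induction k; unfold cum in *; simpl; [lia|]. pose proof (hne k). destruct (d k); [congruence|]. simpl. lia. }
  assert (helem : forall k j, (j < length (d k))%nat -> go 0%nat (cum k + j)%nat (S (cum k + j)) = nth j (d k) dflt).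
  { intros k j hj. pose proof (hgo k 0%nat j (S (cum k + j))). simpl in H. unfold cum. apply H; auto. pose proof (hcum k); lia. }
  exists (fun i => go 0%nat i (S i)). split; [|split].
  - intros n g hg. destruct (In_nth _ _ dflt hg) as [j [hj hjg]]. exists (cum n + j)%nat. rewrite helem; auto.
  - intros i.
    assert (hstage : exists k j, (j < length (d k))%nat /\ i = (cum k + j)%nat).
    { assert (gen : forall i k, (i < cum k)%nat -> exists k' j, (j < length (d k'))%nat /\ i = (cum k' + j)%nat).
      { intros i0 k. induction k; intros h; [unfold cum in h; simpl in h; lia|].
        destruct (Nat.ltb_spec i0 (cum k)); [apply IHk; auto|].
        exists k, (i0 - cum k)%nat. unfold cum in *. simpl in h. split; lia. }
      apply (gen i (S i)). pose proof (hcum (S i)); lia. }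
    destruct hstage as [k [j [hj ->]]]. exists k. rewrite helem; auto. apply nth_In; auto.
  - assert (hsum : forall N, sumR (cum N) (fun i => gw (go 0%nat i (S i))) = sumR N (fun n => wl (d n))).
    { induction N; [reflexivity|]. unfold cum. simpl sumN. fold (cum N). rewrite sumR_split, IHN.
      change (sumR (S N) ?f) with (sumR N f + f N). cbv beta. f_equal. rewrite <- wl_nth. apply sumR_ext. intros j hj. rewrite helem; auto. }
    intros K. rewrite <- hsum. apply sumR_mono; [intros; apply Rlt_le, gw_pos| apply hcum].
Qed.

Lemma sum_f_R0_sumR f K : sum_f_R0 f K = sumR (S K) f.
Proof. induction K; simpl; [lra|]. rewrite IHK. simpl. lra. Qed.

Lemma small_pow eps : 0 < eps -> exists M, (/2)^M < eps.
Proof. intros he. destruct (pow_lt_1_zero (/2) ltac:(rewrite Rabs_right; lra) eps he) as [M hM].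
  exists M. specialize (hM M (le_n M)). rewrite Rabs_right in hM; auto. apply Rle_ge, Rlt_le, half_pow_pos. Qed.

Lemma gnull_null F : gnull F -> null F.
Proof.
  intros hF eps he. destruct (small_pow (eps/4) ltac:(lra)) as [M hM].
  destruct (gnull_std F hF (eps/4) ltac:(lra)) as [c [hstd [hc hw]]].
  pose (d := fun n => c n ++ [std (n + M) emp]).
  destruct (flatten d) as [e [he1 [he2 he3]]].
  { intros n; unfold d; destruct (c n); simpl; discriminate. }
  assert (hestd : forall i, e i = std (gL (e i)) (gs (e i))).
  { intros i. destruct (he2 i) as [n hn]. unfold d in hn. apply in_app_or in hn as [hn|hn].
    - pose proof (hstd n _ hn). destruct (e i) as [[a b] s]; unfold std, gL, gs, gm in *; simpl in *; subst; auto.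
    - destruct hn as [hn|[]]. rewrite <- hn. reflexivity. }
  exists (fun i => gL (e i)), (fun i => gs (e i)). split.
  - intros f hf. destruct (hc f hf) as [n [g [hg hgf]]]. destruct (he1 n g) as [i hi].
    { unfold d; apply in_or_app; auto. }
    exists i. intros k hk. pose proof (hestd i) as hs. rewrite hi in hs, hk |- *. rewrite hs in hgf. rewrite gin_std in hgf. apply hgf; auto.
  - intros K. rewrite sum_f_R0_sumR.
    apply Rle_lt_trans with (sumR (S K) (fun n => wl (d n))).
    + eapply Rle_trans; [|apply he3]. apply Req_le, sumR_ext. intros i _. rewrite (hestd i) at 2. rewrite gw_std. reflexivity.
    + unfold d. rewrite (sumR_ext _ _ (fun n => wl (c n) + (/2)^M * (/2)^n)).
      * rewrite sumR_plus, sumR_scal. fold (cwt c (S K)). pose proof (hw (S K)).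
        assert (sumR (S K) (fun n => (/2)^n) <= 2).
        { assert (forall N, sumR N (fun n => (/2)^n) = 2 * (1 - (/2)^N)).
          { induction N; simpl; [lra|]. rewrite IHN. simpl. lra. }
          rewrite H0. pose proof (half_pow_pos (S K)). lra. }
        pose proof (half_pow_pos M). assert ((/2)^M * sumR (S K) (pow (/2)) <= (/2)^M * 2) by (apply Rmult_le_compat_l; [lra| exact H0]). lra.
      * intros i _. rewrite wl_app. simpl. rewrite gw_std, pow_add. lra.
Qed.

Lemma null_gnull F : null F -> gnull F.
Proof.
  intros hF eps he. destruct (hF eps he) as [n [s [hc hw]]].
  exists (fun i => [std (n i) (s i)]). split.
  - intros x hx. destruct (hc x hx) as [i hi]. exists i, (std (n i) (s i)). split; [left; auto| apply (proj2 (gin_std _ _ _)); auto].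
  - intros N. destruct N; [unfold cwt; simpl; lra|]. unfold cwt. specialize (hw N). rewrite sum_f_R0_sumR in hw.
    apply Rlt_le. eapply Rle_lt_trans; [|exact hw]. apply Req_le, sumR_ext. intros i _. simpl. rewrite gw_std. lra.
Qed.

Fixpoint Ex (L : nat) (g : subw -> R) (x : subw) : R :=
  match L with 0%nat => g x | S L' => (Ex L' g (upd x L' false) + Ex L' g (upd x L' true)) / 2 end.

Lemma Ex_ext L g h x : (forall y, g y = h y) -> Ex L g x = Ex L h x.
Proof. revert x; induction L; intros x H; simpl; auto. rewrite !IHL; auto. Qed.
Lemma Ex_mono L g h x : (forall y, g y <= h y) -> Ex L g x <= Ex L h x.
Proof. revert x; induction L; intros x H; simpl; auto. pose proof (IHL (upd x L false) H); pose proof (IHL (upd x L true) H); lra. Qed.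
Lemma Ex_plus L g h x : Ex L (fun y => g y + h y) x = Ex L g x + Ex L h x.
Proof. revert x; induction L; intros x; simpl; auto. rewrite !IHL; lra. Qed.
Lemma Ex_scal L c g x : Ex L (fun y => c * g y) x = c * Ex L g x.
Proof. revert x; induction L; intros x; simpl; auto. rewrite !IHL; lra. Qed.
Lemma Ex_const L c x : Ex L (fun _ => c) x = c.
Proof. revert x; induction L; intros x; simpl; auto. rewrite !IHL; lra. Qed.
Lemma Ex_sumR L n (f : nat -> subw -> R) x : Ex L (fun y => sumR n (fun i => f i y)) x = sumR n (fun i => Ex L (f i) x).
Proof. induction n; simpl. - apply Ex_const. - rewrite Ex_plus, IHn; reflexivity. Qed.

Lemma upd_agree x L b k : k <> L -> upd x L b k = x k.
Proof. intros h; unfold upd; destruct (Nat.eqb_spec k L); congruence. Qed.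

Lemma Ex_dep L0 g : (forall x y, (forall k, (k < L0)%nat -> x k = y k) -> g x = g y) ->
  forall L x y, (forall k, (L <= k < L0)%nat -> x k = y k) -> Ex L g x = Ex L g y.
Proof.
  intros hg L. induction L; intros x y h; simpl.
  - apply hg. intros k hk; apply h; lia.
  - f_equal. f_equal; apply IHL; intros k hk; unfold upd; destruct (Nat.eqb_spec k L); auto; apply h; lia.
Qed.

Lemma Ex_irrel L0 g : (forall x y, (forall k, (k < L0)%nat -> x k = y k) -> g x = g y) ->
  forall L x, (L0 <= L)%nat -> Ex L g x = Ex L0 g x.
Proof.
  intros hg L x hL. induction hL; auto. simpl. rewrite <- IHhL.
  rewrite (Ex_dep L0 g hg m (upd x m false) x), (Ex_dep L0 g hg m (upd x m true) x); [lra| |];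
  intros k hk; rewrite upd_agree; auto; lia.
Qed.

Lemma Ex_factor L (a : subw -> R) h : (forall y y', (forall k, (L <= k)%nat -> y k = y' k) -> a y = a y') ->
  forall x, Ex L (fun y => a y * h y) x = a x * Ex L h x.
Proof.
  induction L; intros ha x; simpl; auto.
  rewrite !IHL.
  - rewrite (ha (upd x L false) x), (ha (upd x L true) x); [lra| |]; intros k hk; rewrite upd_agree; auto; lia.
  - intros y y' hy; apply ha; intros k hk; apply hy; lia.
  - intros y y' hy; apply ha; intros k hk; apply hy; lia.
Qed.

Definition ind (P : Prop) : R := if excluded_middle_informative P then 1 else 0.
Lemma ind_0_1 P : ind P = 0 \/ ind P = 1.
Proof. unfold ind; destruct (excluded_middle_informative P); auto. Qed.
Lemma ind_nonneg P : 0 <= ind P. Proof. destruct (ind_0_1 P) as [->| ->]; lra. Qed.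
Lemma ind_true (P : Prop) : P -> ind P = 1. Proof. unfold ind; destruct (excluded_middle_informative P); tauto. Qed.
Lemma ind_false (P : Prop) : ~ P -> ind P = 0. Proof. unfold ind; destruct (excluded_middle_informative P); tauto. Qed.
Lemma ind_iff P Q : (P <-> Q) -> ind P = ind Q.
Proof. intros h; unfold ind; destruct (excluded_middle_informative P), (excluded_middle_informative Q); tauto. Qed.

Lemma gin_dep g x y : (forall k, (k < gL g)%nat -> x k = y k) -> gin g x -> gin g y.
Proof. intros h hx k hk hm. rewrite <- h; auto. Qed.

Lemma Ex_gin_exact Lg m s x : Ex Lg (fun y => ind (gin (Lg, m, s) y)) x = gw (Lg, m, s).
Proof.
  revert x. induction Lg; intros x.
  - simpl. unfold gw, gL, gm; simpl. apply ind_true. intros k hk; unfold gL in hk; simpl in hk; lia.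
  - pose (c := fun y : subw => if m Lg then ind (y Lg = s Lg) else 1).
    assert (hdec : forall y, ind (gin (S Lg, m, s) y) = c y * ind (gin (Lg, m, s) y)).
    { intros y. unfold c. destruct (m Lg) eqn:Em.
      - destruct (classic (y Lg = s Lg)) as [e|e].
        + rewrite (ind_true (y Lg = s Lg) e). rewrite Rmult_1_l. apply ind_iff. split; [apply gin_restrict|].
          intros h k hk hm. unfold gL, gm, gs in *; simpl in *. destruct (Nat.eq_dec k Lg); [subst; auto|apply h; unfold gL, gm; simpl; [lia|auto]].
        + rewrite (ind_false (y Lg = s Lg) e). rewrite Rmult_0_l. apply ind_false. intros h; apply e. apply (gin_last Lg m s); auto.
      - rewrite Rmult_1_l. apply ind_iff. split; [apply gin_restrict|].
        intros h k hk hm. unfold gL, gm, gs in *; simpl in *. destruct (Nat.eq_dec k Lg); [subst; congruence|apply h; unfold gL, gm; simpl; [lia|auto]]. }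
    assert (hc : forall y y', (forall k, (Lg <= k)%nat -> y k = y' k) -> c y = c y')
      by (intros y y' hy; unfold c; rewrite (hy Lg (le_n _)); reflexivity).
    assert (heq : forall z, Ex Lg (fun y => ind (gin (S Lg, m, s) y)) z = c z * gw (Lg, m, s)).
    { intros z. rewrite (Ex_ext Lg _ (fun y => c y * ind (gin (Lg, m, s) y))); auto.
      rewrite (Ex_factor Lg c _ hc). rewrite IHLg. reflexivity. }
    simpl Ex. rewrite !heq. unfold c. unfold gw, gL, gm; simpl. destruct (m Lg) eqn:Em.
    + unfold upd. rewrite !Nat.eqb_refl. destruct (s Lg).
      * rewrite (ind_false (false = true) ltac:(discriminate)), (ind_true (true = true) eq_refl). rewrite pow_add. simpl. lra.
      * rewrite (ind_true (false = false) eq_refl), (ind_false (true = false) ltac:(discriminate)). rewrite pow_add. simpl. lra.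
    + rewrite Nat.add_0_r. lra.
Qed.

Lemma Ex_gin L g x : (gL g <= L)%nat -> Ex L (fun y => ind (gin g y)) x = gw g.
Proof.
  intros hL. destruct g as [[Lg m] s]. rewrite (Ex_irrel Lg).
  - apply Ex_gin_exact.
  - intros y y' hy. apply ind_iff. split; apply gin_dep; unfold gL; simpl; intros; [|symmetry]; auto.
  - exact hL.
Qed.

Definition wind (l : list gcyl) (y : subw) : R := fold_right (fun g a => ind (gin g y) + a) 0 l.
Lemma wind_nonneg l y : 0 <= wind l y.
Proof. induction l; simpl; [lra|]. pose proof (ind_nonneg (gin a y)); lra. Qed.
Lemma wind_ge1 l y g : In g l -> gin g y -> 1 <= wind l y.
Proof. induction l; simpl; [tauto|]. intros [<-|h] hg.
  - rewrite ind_true; auto. pose proof (wind_nonneg l y); lra.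
  - pose proof (IHl h hg). pose proof (ind_nonneg (gin a y)); lra. Qed.
Lemma Ex_wind L l x : (forall g, In g l -> (gL g <= L)%nat) -> Ex L (wind l) x = wl l.
Proof. induction l; intros h.
  - simpl. exact (Ex_const L 0 x).
  - change (wind (a :: l)) with (fun y => ind (gin a y) + wind l y). rewrite Ex_plus, IHl, Ex_gin; [simpl; reflexivity| apply h; simpl; auto| intros; apply h; simpl; auto]. Qed.

Fixpoint maxlev (c : cover) (N : nat) : nat :=
  match N with 0%nat => 0%nat | S N' => Nat.max (maxlev c N') (fold_right (fun g a => Nat.max (gL g) a) 0%nat (c N')) end.
Lemma maxlev_spec c N n g : (n < N)%nat -> In g (c n) -> (gL g <= maxlev c N)%nat.
Proof.
  induction N; intros hn hg; [lia|]. simpl. destruct (Nat.eq_dec n N).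
  - subst. assert (forall l, In g l -> (gL g <= fold_right (fun g a => Nat.max (gL g) a) 0%nat l)%nat).
    { induction l; simpl; [tauto|]. intros [<-|h]; [lia|]. specialize (IHl h); lia. }
    specialize (H _ hg); lia.
  - specialize (IHN ltac:(lia) hg); lia.
Qed.
Lemma maxlev_mono c N N' : (N <= N')%nat -> (maxlev c N <= maxlev c N')%nat.
Proof. intros h; induction h; simpl; lia. Qed.

Lemma Ex_cover c N L x : (maxlev c N <= L)%nat ->
  Ex L (fun y => sumR N (fun n => wind (c n) y)) x = cwt c N.
Proof.
  intros hL. rewrite Ex_sumR. unfold cwt. apply sumR_ext. intros i hi. apply Ex_wind.
  intros g hg. pose proof (maxlev_spec c N i g hi hg); lia.
Qed.

Lemma compact_cover (c : cover) : covers c (fun _ => True) ->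
  exists N, forall x, exists n g, (n < N)%nat /\ In g (c n) /\ gin g x.
Proof.
  intros hc. apply NNPP; intro hno.
  pose (bad := fun (p : subw) (n : nat) => forall N, exists x, (forall k, (k < n)%nat -> x k = p k) /\
                 forall n' g, (n' < N)%nat -> In g (c n') -> ~ gin g x).
  assert (b0 : bad emp 0%nat).
  { intros N. apply NNPP; intro h. apply hno. exists N. intros x. apply NNPP; intro h2. apply h. exists x. split; [intros; lia|].
    intros n' g hn hg hgx. apply h2. exists n', g; auto. }
  assert (bstep : forall p n, bad p n -> bad (upd p n true) (S n) \/ bad (upd p n false) (S n)).
  { intros p n hb. apply NNPP; intro h. apply not_or_and in h as [h1 h2].
    apply not_all_ex_not in h1 as [N1 h1]. apply not_all_ex_not in h2 as [N2 h2].
    destruct (hb (Nat.max N1 N2)) as [x [hx1 hx2]].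
    destruct (x n) eqn:Exn.
    - apply h1. exists x. split.
      + intros k hk. unfold upd. destruct (Nat.eqb_spec k n); [subst; auto| apply hx1; lia].
      + intros n' g hn' hg. apply (hx2 n' g); auto; lia.
    - apply h2. exists x. split.
      + intros k hk. unfold upd. destruct (Nat.eqb_spec k n); [subst; auto| apply hx1; lia].
      + intros n' g hn' hg. apply (hx2 n' g); auto; lia. }
  pose (pre := fix pre (n : nat) : subw := match n with 0%nat => emp | S n' =>
          upd (pre n') n' (dec (bad (upd (pre n') n' true) (S n'))) end).
  assert (hpre : forall n, bad (pre n) n).
  { induction n; auto. simpl. destruct (bstep _ _ IHn) as [h|h].
    - rewrite (proj2 (dec_true _) h). exact h.
    - destruct (dec (bad (upd (pre n) n true) (S n))) eqn:E; [apply (proj1 (dec_true _)) in E; exact E| exact h]. }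
  pose (xs := fun k => pre (S k) k).
  assert (hxs : forall n k, (k < n)%nat -> pre n k = xs k).
  { induction n; intros k hk; [lia|]. unfold xs. destruct (Nat.eq_dec k n).
    - subst; reflexivity.
    - simpl. rewrite upd_agree; auto. apply IHn; lia. }
  destruct (hc xs I) as [n0 [g [hg hgx]]].
  destruct (hpre (gL g) (S n0)) as [x [hx1 hx2]]. apply (hx2 n0 g ltac:(lia) hg).
  apply (gin_dep g xs); auto. intros k hk. rewrite hx1; auto. rewrite hxs; auto.
Qed.

Lemma full_not_gnull : ~ gnull (fun _ => True).
Proof.
  intros h. destruct (h (1/2) ltac:(lra)) as [c [hc hw]].
  destruct (compact_cover c hc) as [N hN].
  pose proof (Ex_cover c N (maxlev c N) emp (le_n _)) as e.
  assert (1 <= Ex (maxlev c N) (fun y => sumR N (fun n => wind (c n) y)) emp).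
  { rewrite <- (Ex_const (maxlev c N) 1 emp). apply Ex_mono. intros y.
    destruct (hN y) as [n [g [hn [hg hgy]]]].
    assert (hsplit : (N = S n + (N - S n))%nat) by lia. rewrite hsplit, sumR_split.
    change (sumR (S n) ?f) with (sumR n f + f n). cbv beta.
    pose proof (wind_ge1 _ _ _ hg hgy).
    assert (0 <= sumR n (fun i => wind (c i) y)) by (apply sumR_nonneg; intros; apply wind_nonneg).
    assert (0 <= sumR (N - S n) (fun j => wind (c (S n + j)%nat) y)) by (apply sumR_nonneg; intros; apply wind_nonneg).
    lra. }
  specialize (hw N). lra.
Qed.

Lemma upd_upd_comm x a b c d : a <> c -> upd (upd x a b) c d = upd (upd x c d) a b.
Proof. intros h; apply functional_extensionality; intros k; unfold upd.
  destruct (Nat.eqb_spec k c), (Nat.eqb_spec k a); subst; auto; congruence. Qed.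

Lemma Ex_shift L g x L' b : (L <= L')%nat -> Ex L g (upd x L' b) = Ex L (fun y => g (upd y L' b)) x.
Proof.
  revert x. induction L; intros x hL; simpl; auto.
  rewrite (upd_upd_comm x L' b L false) by lia. rewrite (upd_upd_comm x L' b L true) by lia.
  rewrite !IHL by lia. reflexivity.
Qed.

Lemma upd_self x L : upd x L (x L) = x.
Proof. apply functional_extensionality; intros k; unfold upd; destruct (Nat.eqb_spec k L); subst; auto. Qed.

Lemma pat_cover L (D : subw -> Prop) : (forall x y, (forall k, (k < L)%nat -> x k = y k) -> D x -> D y) ->
  exists ts, (forall x, D x -> exists t, In t ts /\ gin (std L t) x) /\
    INR (length ts) * (/2)^L = Ex L (fun y => ind (D y)) emp.
Proof.
  revert D. induction L; intros D hD.
  - destruct (classic (D emp)) as [h|h].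
    + exists [emp]. split; [intros x _; exists emp; split; [left; auto| apply gin_std; intros; lia]|].
      simpl. rewrite ind_true; auto. lra.
    + exists []. split; [intros x hx; exfalso; apply h; apply (hD x); auto; intros; lia|].
      simpl. rewrite ind_false; auto. lra.
  - assert (hDb : forall b, forall x y, (forall k, (k < L)%nat -> x k = y k) -> D (upd x L b) -> D (upd y L b)).
    { intros b x y h. apply hD. intros k hk. unfold upd. destruct (Nat.eqb_spec k L); auto. apply h; lia. }
    destruct (IHL _ (hDb false)) as [ts0 [hc0 hw0]]. destruct (IHL _ (hDb true)) as [ts1 [hc1 hw1]].
    exists (map (fun t => upd t L false) ts0 ++ map (fun t => upd t L true) ts1). split.
    + intros x hx. destruct (x L) eqn:ExL.
      * destruct (hc1 x) as [t [ht hxt]]; [rewrite <- ExL, upd_self; auto|].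
        exists (upd t L true). split; [apply in_or_app; right; apply (in_map (fun t => upd t L true)); auto|].
        apply gin_std. intros k hk. unfold upd. destruct (Nat.eqb_spec k L); [subst; auto|]. rewrite gin_std in hxt; apply hxt; lia.
      * destruct (hc0 x) as [t [ht hxt]]; [rewrite <- ExL, upd_self; auto|].
        exists (upd t L false). split; [apply in_or_app; left; apply (in_map (fun t => upd t L false)); auto|].
        apply gin_std. intros k hk. unfold upd. destruct (Nat.eqb_spec k L); [subst; auto|]. rewrite gin_std in hxt; apply hxt; lia.
    + rewrite length_app, !length_map, plus_INR. simpl Ex. rewrite !Ex_shift by lia. rewrite <- hw0, <- hw1.
      simpl. lra.
Qed.

Definition ev (x : subw) : subw := fun k => x (2 * k)%nat.
Definition od (x : subw) : subw := fun k => x (S (2 * k)).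
Definition glue (a b : subw) : subw := fun k => if Nat.even k then a (Nat.div2 k) else b (Nat.div2 k).
Lemma ev_glue a b : ev (glue a b) = a.
Proof. apply functional_extensionality; intros k; unfold ev, glue. rewrite Nat.even_even, Nat.div2_double. reflexivity. Qed.
Lemma od_glue a b : od (glue a b) = b.
Proof. apply functional_extensionality; intros k; unfold od, glue.
  replace (S (2 * k)) with (2 * k + 1)%nat by lia. rewrite Nat.even_odd, Nat.div2_odd'. reflexivity. Qed.
Lemma glue_ev_od x : glue (ev x) (od x) = x.
Proof. apply functional_extensionality; intros k; unfold ev, od, glue.
  destruct (Nat.Even_or_Odd k) as [[j ->]|[j ->]].
  - rewrite Nat.even_even, Nat.div2_double. reflexivity.
  - rewrite Nat.even_odd, Nat.div2_odd'. replace (S (2 * j)) with (2 * j + 1)%nat by lia. reflexivity. Qed.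

Definition mres (L : nat) (m : subw) : subw := fun j => andb (m j) (Nat.ltb j L).
Lemma cnt_ext L m m' : (forall k, (k < L)%nat -> m k = m' k) -> cnt L m = cnt L m'.
Proof. induction L; intros h; simpl; auto. rewrite IHL by (intros; apply h; lia). rewrite h by lia. reflexivity. Qed.
Lemma cnt_mres L L' m : (L <= L')%nat -> cnt L' (mres L m) = cnt L m.
Proof. intros h. induction h.
  - apply cnt_ext. intros k hk. unfold mres. rewrite (proj2 (Nat.ltb_lt k L) hk), andb_true_r. reflexivity.
  - simpl. unfold mres at 2. rewrite (proj2 (Nat.ltb_ge m0 L) ltac:(lia)), andb_false_r. lia.
Qed.

Definition gA (g : gcyl) : gcyl := (gL g, fun k => mres (gL g) (gm g) (2*k)%nat, ev (gs g)).
Definition gB (g : gcyl) : gcyl := (gL g, fun k => mres (gL g) (gm g) (S (2*k)), od (gs g)).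

Lemma cnt_double N m : cnt (2*N) m = (cnt N (fun k => m (2*k)%nat) + cnt N (fun k => m (S (2*k))))%nat.
Proof. induction N; auto. replace (2 * S N)%nat with (S (S (2*N))) by lia.
  change (cnt (S (S (2*N))) m) with ((cnt (2*N) m + (if m (2*N)%nat then 1 else 0)) + (if m (S (2*N)) then 1 else 0))%nat.
  change (cnt (S N) ?f) with (cnt N f + (if f N then 1 else 0))%nat. rewrite IHN. cbv beta. lia. Qed.

Lemma gw_split g : gw g = gw (gA g) * gw (gB g).
Proof. unfold gw, gA, gB, gL, gm; simpl. rewrite <- pow_add. f_equal.
  rewrite <- cnt_double. symmetry. apply cnt_mres. lia. Qed.

Lemma gin_split g a b : gin g (glue a b) <-> gin (gA g) a /\ gin (gB g) b.
Proof.
  destruct g as [[L m] s]. unfold gin, gA, gB, gL, gm, gs, mres, ev, od; cbn [fst snd]. split.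
  - intros h. split.
    + intros k hk hm. apply andb_prop in hm as [h1 h2]. apply Nat.ltb_lt in h2.
      specialize (h _ h2 h1). unfold glue in h. rewrite Nat.even_even, Nat.div2_double in h. exact h.
    + intros k hk hm. apply andb_prop in hm as [h1 h2]. apply Nat.ltb_lt in h2.
      specialize (h _ h2 h1). unfold glue in h. replace (S (2*k)) with (2*k+1)%nat in * by lia.
      rewrite Nat.even_odd, Nat.div2_odd' in h. exact h.
  - intros [ha hb] j hj hm. unfold glue. destruct (Nat.Even_or_Odd j) as [[k ->]|[k ->]].
    + rewrite Nat.even_even, Nat.div2_double. apply ha; [lia|]. rewrite hm. simpl. apply Nat.ltb_lt; auto.
    + rewrite Nat.even_odd, Nat.div2_odd'. replace (2*k+1)%nat with (S (2*k)) in * by lia. apply hb; [lia|].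
      rewrite hm. simpl. apply Nat.ltb_lt; auto.
Qed.

Lemma telescope (P : nat -> Prop) : (forall N, P N -> P (S N)) -> ~ P 0%nat ->
  forall K, sumR K (fun N => ind (P (S N) /\ ~ P N)) = ind (P K).
Proof.
  intros hm h0 K. induction K.
  - simpl. rewrite ind_false; auto.
  - simpl. rewrite IHK. destruct (classic (P K)) as [h|h].
    + rewrite (ind_true (P K)), (ind_false (P (S K) /\ ~ P K)), (ind_true (P (S K))); auto; [lra| tauto].
    + rewrite (ind_false (P K) h). destruct (classic (P (S K))) as [h'|h'].
      * rewrite !ind_true; auto. lra.
      * rewrite !ind_false; auto; [lra|tauto].
Qed.

Definition phiS (l : list gcyl) (b : subw) : R := fold_right (fun g acc => ind (gin (gB g) b) * gw (gA g) + acc) 0 l.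
Lemma phiS_nonneg l b : 0 <= phiS l b.
Proof. induction l; simpl; [lra|]. pose proof (ind_nonneg (gin (gB a) b)). pose proof (gw_pos (gA a)). nra. Qed.
Lemma phiS_wl l b : phiS l b = wl (map gA (filter (fun g => dec (gin (gB g) b)) l)).
Proof. induction l; simpl; auto. destruct (dec (gin (gB a) b)) eqn:E.
  - rewrite (ind_true _ (proj1 (dec_true _) E)). simpl. rewrite IHl. lra.
  - rewrite (ind_false _ (proj1 (dec_false _) E)). rewrite IHl. lra. Qed.
Lemma Ex_phiS L l x : (forall g, In g l -> (gL g <= L)%nat) -> Ex L (phiS l) x = wl l.
Proof. induction l; intros h.
  - simpl. exact (Ex_const L 0 x).
  - change (phiS (a :: l)) with (fun y => ind (gin (gB a) y) * gw (gA a) + phiS l y).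
    rewrite Ex_plus, IHl by (intros; apply h; simpl; auto).
    rewrite (Ex_ext L _ (fun y => gw (gA a) * ind (gin (gB a) y))) by (intros; lra).
    rewrite Ex_scal, Ex_gin by (unfold gB, gL at 1; simpl; apply h; simpl; auto).
    simpl. rewrite (gw_split a). lra.
Qed.
Lemma phiS_dep l L b b' : (forall g, In g l -> (gL g <= L)%nat) -> (forall k, (k < L)%nat -> b k = b' k) -> phiS l b = phiS l b'.
Proof. induction l; intros h hb; simpl; auto. rewrite IHl by (auto; intros; apply h; simpl; auto).
  f_equal. f_equal. apply ind_iff. assert (gL (gB a) <= L)%nat by (unfold gB, gL at 1; simpl; apply h; simpl; auto).
  split; apply gin_dep; intros; [|symmetry]; apply hb; lia. Qed.

Lemma fubini T : gnull T -> gnull (fun b => ~ gnull (fun a => T (glue a b))).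
Proof.
  intros hT.
  pose (Bm := fun (m : nat) b => forall c, covers c (fun a => T (glue a b)) -> exists N, (/2)^m < cwt c N).
  apply gnull_sub with (G := fun b => exists m, Bm m b).
  2:{ intros b hb. apply NNPP; intro hc. apply hb. intros eps he. destruct (small_pow eps he) as [m hm].
      apply NNPP; intro hc2. apply hc. exists m. intros c hcov. apply NNPP; intro hc3. apply hc2. exists c. split; auto.
      intros N. apply Rnot_lt_le. intro hlt. apply hc3. exists N. lra. }
  apply gnull_countable. intros m eps he.
  pose proof (half_pow_pos m) as hpm.
  destruct (hT (eps * (/2)^m) ltac:(nra)) as [c [hc hw]].
  pose (Phi := fun N b => sumR N (fun n => phiS (c n) b)).
  pose (D := fun N b => (/2)^m < Phi N b).
  pose (L := fun N => maxlev c N).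
  assert (hPhi_nonneg : forall N b, 0 <= Phi N b) by (intros; apply sumR_nonneg; intros; apply phiS_nonneg).
  assert (hDmono : forall b N, D N b -> D (S N) b).
  { intros b N h. unfold D, Phi in *. simpl. pose proof (phiS_nonneg (c N) b). lra. }
  assert (hD0 : forall b, ~ D 0%nat b) by (intros b; unfold D, Phi; simpl; lra).
  assert (hPhidep : forall N b b', (forall k, (k < L N)%nat -> b k = b' k) -> Phi N b = Phi N b').
  { intros N b b' hb. unfold Phi. apply sumR_ext. intros i hi. apply (phiS_dep _ (L N)); auto.
    intros g hg; apply (maxlev_spec c N i g hi hg). }
  assert (hex : forall N, exists ts, (forall x, (D (S N) x /\ ~ D N x) -> exists t, In t ts /\ gin (std (L (S N)) t) x) /\
      INR (length ts) * (/2)^(L (S N)) = Ex (L (S N)) (fun y => ind (D (S N) y /\ ~ D N y)) emp).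
  { intros N. apply pat_cover. intros x y hxy [h1 h2]. unfold D in *.
    rewrite <- (hPhidep (S N) x y hxy). rewrite <- (hPhidep N x y); auto.
    intros k hk; apply hxy. pose proof (maxlev_mono c N (S N) ltac:(lia)). unfold L in *. lia. }
  pose (ts := fun N => proj1_sig (constructive_indefinite_description _ (hex N))).
  assert (hts : forall N, (forall x, (D (S N) x /\ ~ D N x) -> exists t, In t (ts N) /\ gin (std (L (S N)) t) x) /\
      INR (length (ts N)) * (/2)^(L (S N)) = Ex (L (S N)) (fun y => ind (D (S N) y /\ ~ D N y)) emp).
  { intros N; unfold ts; destruct (constructive_indefinite_description _ (hex N)); auto. }
  exists (fun N => map (std (L (S N))) (ts N)). split.
  - intros b hb. destruct (hb (fun n => map gA (filter (fun g => dec (gin (gB g) b)) (c n)))) as [N hN].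
    + intros a ha. destruct (hc _ ha) as [n [g [hg hga]]]. apply gin_split in hga as [h1 h2].
      exists n, (gA g). split; auto. apply in_map. apply filter_In. split; auto. apply (proj2 (dec_true _)); auto.
    + assert (hDN : D N b).
      { unfold D, Phi. unfold cwt in hN. erewrite sumR_ext; [exact hN|]. intros i _. rewrite phiS_wl. reflexivity. }
      assert (hfirst : exists N', D (S N') b /\ ~ D N' b).
      { clear hN. induction N; [exfalso; apply (hD0 b hDN)|].
        destruct (classic (D N b)) as [h|h]; [apply IHN; auto| exists N; auto]. }
      destruct hfirst as [N' hN']. destruct (proj1 (hts N') b hN') as [t [ht htb]].
      exists N', (std (L (S N')) t). split; auto. apply in_map; auto.
  - intros K. unfold cwt.
    rewrite (sumR_ext K _ (fun N => Ex (L K) (fun y => ind (D (S N) y /\ ~ D N y)) emp)).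
    2:{ intros N hN. rewrite wl_map_std, (proj2 (hts N)). symmetry. apply Ex_irrel.
        - intros x y hxy. apply ind_iff. unfold D. rewrite (hPhidep (S N) x y hxy).
          rewrite (hPhidep N x y); [tauto|]. intros k hk; apply hxy. pose proof (maxlev_mono c N (S N) ltac:(lia)). unfold L in *. lia.
        - apply maxlev_mono; lia. }
    rewrite <- Ex_sumR.
    rewrite (Ex_ext _ _ (fun y => ind (D K y))).
    2:{ intros y. apply (telescope (fun N => D N y)); auto. }
    apply Rle_trans with (Ex (L K) (fun y => / (/2)^m * Phi K y) emp).
    + apply Ex_mono. intros y. destruct (classic (D K y)) as [h|h].
      * rewrite ind_true; auto. unfold D in h. apply Rmult_le_reg_l with ((/2)^m); auto.
        rewrite <- Rmult_assoc, Rinv_r by lra. lra.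
      * rewrite ind_false; auto. pose proof (hPhi_nonneg K y). pose proof (Rinv_0_lt_compat _ hpm). nra.
    + rewrite Ex_scal. unfold Phi. rewrite Ex_sumR.
      rewrite (sumR_ext K _ (fun n => wl (c n))).
      2:{ intros i hi. apply Ex_phiS. intros g hg. apply (maxlev_spec c K i g hi hg). }
      fold (cwt c K). specialize (hw K). pose proof (Rinv_0_lt_compat _ hpm).
      apply Rmult_le_reg_l with ((/2)^m); auto. rewrite <- Rmult_assoc, Rinv_r by lra. nra.
Qed.

Lemma product_lemma A B : gnull (fun x => A (ev x) /\ B (od x)) -> ~ gnull A -> gnull B.
Proof.
  intros hP hA. apply gnull_sub with (G := fun b => ~ gnull (fun a => A (ev (glue a b)) /\ B (od (glue a b)))).
  - apply (fubini (fun x => A (ev x) /\ B (od x)) hP).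
  - intros b hb hc. apply hA. apply gnull_sub with (1 := hc). intros a ha. rewrite ev_glue, od_glue. auto.
Qed.

Lemma gnull_map (F G : family) (tr : gcyl -> gcyl) (h : subw -> subw) :
  (forall g, gw (tr g) = gw g) -> (forall g x, gin g (h x) -> gin (tr g) x) -> (forall x, G x -> F (h x)) ->
  gnull F -> gnull G.
Proof.
  intros hw hin hGF hF eps he. destruct (hF eps he) as [c [hc hcw]].
  exists (fun n => map tr (c n)). split.
  - intros x hx. destruct (hc (h x) (hGF x hx)) as [n [g [hg hgx]]]. exists n, (tr g). split; [apply in_map; auto| apply hin; auto].
  - intros N. eapply Rle_trans; [|apply (hcw N)]. apply Req_le. unfold cwt. apply sumR_ext. intros i _.
    induction (c i); simpl; auto. rewrite IHl, hw; auto.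
Qed.

Lemma cnt_zero L m : (forall k, (k < L)%nat -> m k = false) -> cnt L m = 0%nat.
Proof. induction L; intros h; simpl; auto. rewrite IHL, h; auto. Qed.

Lemma pull_od B : gnull B -> gnull (fun x => B (od x)).
Proof.
  apply (gnull_map B _ (fun g => (2 * gL g, glue emp (gm g), glue (gs g) (gs g))%nat) od).
  - intros [[L m] s]. unfold gw, gL, gm; cbn [fst snd]. f_equal. rewrite cnt_double.
    rewrite cnt_zero; [|intros k _; unfold glue; rewrite Nat.even_even, Nat.div2_double; reflexivity].
    rewrite Nat.add_0_l. apply cnt_ext. intros k _. unfold glue. replace (S (2*k)) with (2*k+1)%nat by lia. rewrite Nat.even_odd, Nat.div2_odd'. reflexivity.
  - intros [[L m] s] x hg. unfold gin, gL, gm, gs in *; cbn [fst snd] in *. intros j hj hm. unfold glue in *.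
    destruct (Nat.Even_or_Odd j) as [[k ->]|[k ->]].
    + rewrite Nat.even_even in hm. discriminate.
    + rewrite Nat.even_odd, Nat.div2_odd' in *. specialize (hg k ltac:(lia) hm). unfold od in hg.
      replace (2*k+1)%nat with (S (2*k)) by lia. exact hg.
  - auto.
Qed.

Lemma pull_compl A : gnull A -> gnull (fun x => A (compl x)).
Proof.
  apply (gnull_map A _ (fun g => (gL g, gm g, compl (gs g))) compl).
  - intros; reflexivity.
  - intros [[L m] s] x hg. unfold gin, gL, gm, gs in *; simpl in *. intros k hk hm. specialize (hg k hk hm).
    unfold compl in *. destruct (x k), (s k); simpl in *; congruence.
  - auto.
Qed.

Lemma gnull_fin : gnull (fun b => finite_sub b).
Proof.
  apply gnull_sub with (G := fun b => exists N, (fun N b => forall n, (N <= n)%nat -> b n = false) N b).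
  2:{ intros b [N h]; exists N; auto. }
  apply gnull_countable. intros N eps he. destruct (small_pow eps he) as [r hr].
  exists (fun n => match n with 0%nat => [((N + r)%nat, fun j => Nat.leb N j, emp)] | _ => [] end). split.
  - intros b hb. exists 0%nat, ((N + r)%nat, fun j => Nat.leb N j, emp). split; [left; auto|].
    intros k hk hm. unfold gm, gs in *; simpl in *. apply Nat.leb_le in hm. rewrite hb; auto.
  - assert (hcnt : forall r, cnt (N + r) (fun j => Nat.leb N j) = r).
    { induction r0. - rewrite Nat.add_0_r. apply cnt_zero. intros k hk. apply Nat.leb_gt; auto.
      - rewrite Nat.add_succ_r. simpl. rewrite IHr0. rewrite (proj2 (Nat.leb_le N (N + r0)) ltac:(lia)). lia. }
    intros M. destruct M; [unfold cwt; simpl; lra|]. unfold cwt.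
    replace (S M) with (1 + M)%nat by lia. rewrite sumR_split.
    rewrite (sumR_ext M _ (fun _ => 0)); [| intros i _; reflexivity].
    assert (e0 : forall M, sumR M (fun _ => 0) = 0) by (induction M0; simpl; [lra| rewrite IHM0; lra]).
    rewrite e0. simpl. unfold gw, gL, gm; cbn [fst snd]. rewrite hcnt. lra.
Qed.

Definition add_bit (g : gcyl) (p : nat) (b : bool) : gcyl :=
  (Nat.max (gL g) (S p), upd (mres (gL g) (gm g)) p true, upd (gs g) p b).
Definition free_at (g : gcyl) (p : nat) := (gL g <= p)%nat \/ gm g p = false.

Lemma cnt_upd_true L m p : (p < L)%nat -> m p = false -> cnt L (upd m p true) = S (cnt L m).
Proof. induction L; intros hp hm; [lia|]. simpl. destruct (Nat.eq_dec p L).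
  - subst. rewrite (cnt_ext L (upd m L true) m) by (intros k hk; rewrite upd_agree; auto; lia).
    unfold upd; rewrite Nat.eqb_refl, hm. lia.
  - rewrite IHL by (auto; lia). rewrite upd_agree by auto. lia. Qed.

Lemma gw_add_bit g p b : free_at g p -> gw (add_bit g p b) = gw g / 2.
Proof.
  intros hf. unfold gw, add_bit, gL, gm; simpl. fold (gL g) (gm g).
  rewrite cnt_upd_true; [| lia| unfold mres; destruct hf as [h|h]; [rewrite (proj2 (Nat.ltb_ge p (gL g)) h), andb_false_r| rewrite h]; reflexivity].
  rewrite cnt_mres by lia. simpl. lra.
Qed.

Lemma gin_add_bit g p b x : free_at g p -> (gin (add_bit g p b) x <-> gin g x /\ x p = b).
Proof.
  intros hf. unfold gin, add_bit, free_at, gL, gm, gs in *; cbn [fst snd] in *. split.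
  - intros h. split.
    + intros k hk hm. destruct (Nat.eq_dec k p).
      * subst. destruct hf as [hf|hf]; [lia| congruence].
      * specialize (h k ltac:(lia)). rewrite !upd_agree in h by auto. apply h. unfold mres. rewrite hm.
        apply Nat.ltb_lt in hk. rewrite hk. reflexivity.
    + specialize (h p ltac:(lia)). unfold upd in h. rewrite Nat.eqb_refl in h. apply h; auto.
  - intros [h1 h2] k hk hm. unfold upd in *. destruct (Nat.eqb_spec k p); [subst; auto|].
    unfold mres in hm. apply andb_prop in hm as [hm1 hm2]. apply Nat.ltb_lt in hm2. apply h1; auto.
Qed.

Fixpoint addbits (g : gcyl) (pb : list (nat * bool)) : gcyl :=
  match pb with [] => g | (p, b) :: r => addbits (add_bit g p b) r end.

Lemma free_add_bit g p b q : free_at g q -> q <> p -> free_at (add_bit g p b) q.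
Proof. unfold free_at, add_bit, gL, gm; cbn [fst snd]. intros [h|h] hq; right; rewrite upd_agree by auto; unfold mres.
  - rewrite (proj2 (Nat.ltb_ge q _) h), andb_false_r; auto.
  - rewrite h; auto. Qed.

Lemma addbits_spec pb : forall g, NoDup (map fst pb) -> (forall p, In p (map fst pb) -> free_at g p) ->
  (forall x, gin (addbits g pb) x <-> gin g x /\ forall p b, In (p, b) pb -> x p = b) /\
  gw (addbits g pb) = gw g * (/2)^(length pb) /\
  (forall q, free_at g q -> ~ In q (map fst pb) -> free_at (addbits g pb) q).
Proof.
  induction pb as [|[p b] r IH]; intros g hnd hfree.
  - simpl. split; [intros x; split; [intros h; split; auto; intros p b []| tauto]|]. split; [lra| auto].
  - simpl in hnd |- *. inversion hnd as [|? ? hnin hnd']; subst.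
    assert (hf' : forall q, In q (map fst r) -> free_at (add_bit g p b) q).
    { intros q hq. apply free_add_bit; [apply hfree; right; auto| intro; subst; auto]. }
    destruct (IH (add_bit g p b) hnd' hf') as [h1 [h2 h3]]. split; [|split].
    + intros x. rewrite h1, gin_add_bit by (apply hfree; left; auto). split.
      * intros [[ha hb] hc]. split; auto. intros p' b' [e|e]; [inversion e; subst; auto| auto].
      * intros [ha hb]. split; [split; auto|]. intros; apply hb; auto.
    + rewrite h2, gw_add_bit by (apply hfree; left; auto). simpl. lra.
    + intros q hq hn. apply h3; [apply free_add_bit; auto; intro; subst; apply hn; left; auto| intro; apply hn; right; auto].
Qed.

Fixpoint allb (n : nat) : list (list bool) :=
  match n with 0%nat => [[]] | S n' => map (cons false) (allb n') ++ map (cons true) (allb n') end.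
Lemma allb_in n a : length a = n -> In a (allb n).
Proof. revert a; induction n; intros a h; destruct a; simpl in *; try lia; auto.
  apply in_or_app. destruct b; [right| left]; apply in_map; apply IHn; lia. Qed.
Lemma allb_len n a : In a (allb n) -> length a = n.
Proof. revert a; induction n; intros a h; simpl in *. - destruct h as [<-|[]]; auto.
  - apply in_app_or in h as [h|h]; apply in_map_iff in h as [a' [<- h]]; simpl; rewrite IHn; auto. Qed.

Definition pos (k j : nat) : nat :=
  match j with
  | 0%nat => 2 * (2 * k)
  | 1%nat => 2 * S (2 * k)
  | 2%nat => S (2 * (2 * (2 * k)))
  | 3%nat => S (2 * (2 * S (2 * k)))
  | 4%nat => S (2 * S (2 * (2 * k)))
  | _ => S (2 * S (2 * S (2 * k)))
  end%nat.

Lemma pos_inj k j k' j' : (j < 6)%nat -> (j' < 6)%nat -> pos k j = pos k' j' -> k = k' /\ j = j'.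
Proof. intros hj hj' h. destruct j as [|[|[|[|[|[|]]]]]]; destruct j' as [|[|[|[|[|[|]]]]]]; simpl in h; try lia. Qed.

Definition six := [0;1;2;3;4;5]%nat.
Definition phiF (f : list bool -> bool) (x : subw) : subw := fun k => f (map (fun j => x (pos k j)) six).
Definition good (f : list bool -> bool) (b : bool) := filter (fun a => Bool.eqb (f a) b) (allb 6).

Lemma in_combine_pos (x : subw) (n p : nat) (b : bool) : In (p, b) (combine (map (pos n) six) (map (fun j => x (pos n j)) six)) -> x p = b.
Proof. generalize six as l. induction l; simpl; [tauto|]. intros [e|e]; [inversion e; auto| auto]. Qed.

Lemma map_fst_combine_len {A B} (l1 : list A) (l2 : list B) : length l1 = length l2 -> map fst (combine l1 l2) = l1.
Proof. revert l2; induction l1; intros [|b l2] h; simpl in *; auto; try lia. rewrite IHl1; auto. Qed.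

Lemma nodup_six n : NoDup (map (pos n) six).
Proof. unfold six; simpl. repeat constructor; simpl; intros H; repeat destruct H as [H|H]; auto; lia. Qed.

Lemma pull_phi f : (forall b, length (good f b) = 32%nat) ->
  forall n s, exists l, (forall x, (forall k, (k < n)%nat -> phiF f x k = s k) -> exists h, In h l /\ gin h x) /\
    wl l = (/2)^n /\ (forall h, In h l -> forall k j, (n <= k)%nat -> (j < 6)%nat -> free_at h (pos k j)).
Proof.
  intros hbal n s. induction n.
  - exists [(0%nat, emp, emp)]. split; [|split].
    + intros x _. exists (0%nat, emp, emp). split; [left; auto| intros k hk; unfold gL in hk; simpl in hk; lia].
    + simpl. unfold gw, gL, gm; simpl. lra.
    + intros h [<-|[]] k j _ _. left. unfold gL; simpl; lia.
  - destruct IHn as [l [hc [hw hfr]]].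
    pose (ext := fun h => map (fun a => addbits h (combine (map (pos n) six) a)) (good f (s n))).
    assert (hspec : forall h a, In h l -> In a (allb 6) ->
      (forall x, gin (addbits h (combine (map (pos n) six) a)) x <-> gin h x /\ forall p b, In (p, b) (combine (map (pos n) six) a) -> x p = b) /\
      gw (addbits h (combine (map (pos n) six) a)) = gw h * (/2)^6 /\
      (forall q, free_at h q -> ~ In q (map (pos n) six) -> free_at (addbits h (combine (map (pos n) six) a)) q)).
    { intros h a hh ha. pose proof (allb_len _ _ ha) as hla.
      assert (hlen : length (map (pos n) six) = length a) by (rewrite length_map; auto).
      destruct (addbits_spec (combine (map (pos n) six) a) h) as [h1 [h2 h3]].
      - rewrite map_fst_combine_len; auto. apply nodup_six.
      - rewrite map_fst_combine_len; auto. intros p hp. apply in_map_iff in hp as [j [<- hj]].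
        apply hfr; auto. unfold six in hj; simpl in hj; lia.
      - split; auto. split; [rewrite h2, length_combine, hla; reflexivity|]. rewrite map_fst_combine_len in h3; auto. }
    exists (flat_map ext l). split; [|split].
    + intros x hx. destruct (hc x) as [h [hh hhx]]; [intros; apply hx; lia|].
      set (a := map (fun j => x (pos n j)) six).
      assert (ha : In a (allb 6)) by (apply allb_in; reflexivity).
      exists (addbits h (combine (map (pos n) six) a)). split.
      * apply in_flat_map. exists h. split; auto. unfold ext. apply (in_map (fun a => addbits h (combine (map (pos n) six) a))). unfold good. apply filter_In. split; auto.
        specialize (hx n ltac:(lia)). unfold phiF in hx. fold a in hx. rewrite hx. apply eqb_reflx.
      * apply (proj1 (hspec h a hh ha)). split; auto. apply in_combine_pos.
    + assert (hext : forall h, In h l -> wl (ext h) = gw h / 2).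
      { intros h hh. unfold ext.
        assert (forall la, incl la (allb 6) -> wl (map (fun a => addbits h (combine (map (pos n) six) a)) la) = INR (length la) * (gw h * (/2)^6)).
        { induction la; intros hi; [simpl; lra|]. change (wl (map ?F (a :: la))) with (gw (F a) + wl (map F la)). cbv beta.
          rewrite (proj1 (proj2 (hspec h a hh (hi a (or_introl eq_refl))))).
          rewrite IHla by (intros z hz; apply hi; right; auto). change (length (a :: la)) with (S (length la)). rewrite S_INR. lra. }
        rewrite H; [rewrite hbal; simpl; lra|]. unfold good. intros z hz. apply filter_In in hz; tauto. }
      assert (forall l', incl l' l -> wl (flat_map ext l') = wl l' / 2).
      { induction l'; intros hi; [simpl; lra|]. cbn [flat_map]. rewrite wl_app. rewrite (hext a (hi a (or_introl eq_refl))).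
        rewrite IHl' by (intros z hz; apply hi; right; auto). change (wl (a :: l')) with (gw a + wl l'). lra. }
      rewrite H by apply incl_refl. rewrite hw. simpl. lra.
    + intros h' hh' k j hk hj. apply in_flat_map in hh' as [h [hh hh']]. unfold ext in hh'.
      apply in_map_iff in hh' as [a [<- ha]]. unfold good in ha. apply filter_In in ha as [ha _].
      apply (proj2 (proj2 (hspec h a hh ha))).
      * apply hfr; auto; lia.
      * intros hin. apply in_map_iff in hin as [j' [e hj']]. apply pos_inj in e as [e _]; [lia| |auto].
        unfold six in hj'; simpl in hj'; lia.
Qed.

Lemma gnull_phi f (I : family) : (forall b, length (good f b) = 32%nat) -> gnull I -> gnull (fun x => I (phiF f x)).
Proof.
  intros hbal hI eps he. destruct (gnull_std I hI eps he) as [c [hstd [hc hw]]].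
  assert (ex : forall g, exists l, (forall x, (forall k, (k < gL g)%nat -> phiF f x k = gs g k) -> exists h, In h l /\ gin h x) /\
      wl l = (/2)^(gL g)).
  { intros g. destruct (pull_phi f hbal (gL g) (gs g)) as [l [h1 [h2 _]]]. exists l; auto. }
  pose (pl := fun g => proj1_sig (constructive_indefinite_description _ (ex g))).
  assert (hpl : forall g, (forall x, (forall k, (k < gL g)%nat -> phiF f x k = gs g k) -> exists h, In h (pl g) /\ gin h x) /\
      wl (pl g) = (/2)^(gL g)).
  { intros g; unfold pl; destruct (constructive_indefinite_description _ (ex g)); auto. }
  exists (fun n => flat_map pl (c n)). split.
  - intros x hx. destruct (hc _ hx) as [n [g [hg hgx]]]. destruct (proj1 (hpl g) x) as [h [hh hhx]].
    + intros k hk. apply hgx; auto. rewrite (hstd n g hg). reflexivity.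
    + exists n, h. split; auto. apply in_flat_map. exists g; auto.
  - intros N. eapply Rle_trans; [|apply (hw N)]. apply Req_le. unfold cwt. apply sumR_ext. intros i _.
    assert (forall l', incl l' (c i) -> wl (flat_map pl l') = wl l').
    { induction l'; intros hi; simpl; auto. rewrite wl_app, IHl' by (intros z hz; apply hi; right; auto).
      rewrite (proj2 (hpl a)). unfold gw. rewrite (hstd i a (hi a (or_introl eq_refl))), cnt_full. reflexivity. }
    apply H, incl_refl.
Qed.

Definition fA (a : list bool) : bool :=
  match a with
  | [y1; z1; y2; z2; y3; z3] => if z1 then y1 || (z2 && y2) else if z2 then y2 else if z3 then y3 else false
  | _ => false end.
Definition fN (neg : bool) (a : list bool) : bool :=
  match a with
  | [y1; z1; y2; z2; y3; z3] => fA [y1; xorb neg z1; y2; xorb neg z2; y3; xorb neg z3]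
  | _ => false end.

Lemma fN_bal neg b : length (good (fN neg) b) = 32%nat.
Proof. destruct neg, b; vm_compute; reflexivity. Qed.

Lemma fN_le neg y1 z1 y2 z2 y3 z3 : fN neg [y1; z1; y2; z2; y3; z3] = true ->
  (y1 && xorb neg z1) || (y2 && xorb neg z2) || (y3 && xorb neg z3) = true.
Proof. destruct neg, y1, z1, y2, z2, y3, z3; simpl; auto. Qed.

Definition Zs (neg : bool) (y : subw) : subw := fun k => xorb neg (y k).

Lemma T_null (I : family) (neg : bool) : is_ideal I -> gnull I ->
  gnull (fun y => I (inter (ev y) (Zs neg (od y)))).
Proof.
  intros hI hg. set (Tp := fun y => I (inter (ev y) (Zs neg (od y)))).
  apply NNPP; intro hT.
  assert (h2 : ~ gnull (fun x => Tp (ev x) /\ Tp (od x))) by (intro h; apply hT; apply (product_lemma Tp Tp h hT)).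
  assert (h3 : ~ gnull (fun x => Tp (ev x) /\ (Tp (ev (od x)) /\ Tp (od (od x))))).
  { intro h. apply h2. apply (product_lemma Tp (fun x => Tp (ev x) /\ Tp (od x)) h hT). }
  apply h3. apply gnull_sub with (G := fun x => I (phiF (fN neg) x)); [apply gnull_phi; auto; apply fN_bal|].
  intros x [ha [hb hc]]. unfold Tp in *.
  eapply (ideal_down I); [exact hI| apply (ideal_union I _ _ hI (ideal_union I _ _ hI ha hb) hc)|].
  intros k hk. unfold phiF, six in hk. cbn [map] in hk. apply fN_le in hk.
  unfold union_sub, inter, Zs, ev, od. unfold pos in hk. exact hk.
Qed.

Lemma interI_is_ideal I W : is_ideal I -> ~ I W -> is_ideal (interI I W).
Proof.
  intros hI hW. refine (conj _ (conj _ (conj _ _))).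
  - intros x hx; unfold interI; apply (ideal_fin I); auto. eapply finite_sub_le; eauto; apply inter_l.
  - intros x y hy hxy. unfold interI in *; eapply (ideal_down I); eauto. apply inter_glb; [eapply sub_trans; [apply inter_l|auto]|apply inter_r].
  - intros x y hx hy. unfold interI in *; eapply (ideal_down I); [auto| apply (ideal_union I _ _ hI hx hy)| apply inter_union_sub].
  - intros hc. apply hW. unfold interI in hc. eapply (ideal_down I); [exact hI| exact hc|]. apply inter_glb; [apply sub_full| apply sub_refl].
Qed.

Lemma gnull_not_full_ideal I W : is_ideal I -> gnull (interI I W) -> ~ I W.
Proof.
  intros hI hg hW. apply full_not_gnull. apply gnull_sub with (1 := hg). intros x _. unfold interI.
  eapply (ideal_down I); [exact hI| exact hW| apply inter_r].
Qed.

Lemma C3 : atomless null_ideal.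
Proof.
  intros I [hI hn]. apply null_gnull in hn.
  pose proof (fubini _ (T_null I false hI hn)) as F1.
  pose proof (fubini _ (T_null I true hI hn)) as F2.
  destruct (classic (exists Z, gnull (interI I Z) /\ gnull (interI I (compl Z)))) as [[Z [hZ1 hZ2]]|hno].
  - exists (interI I Z), (interI I (compl Z)).
    assert (i1 : is_ideal (interI I Z)) by (apply interI_is_ideal; auto; apply gnull_not_full_ideal; auto).
    assert (i2 : is_ideal (interI I (compl Z))) by (apply interI_is_ideal; auto; apply gnull_not_full_ideal; auto).
    split; [split; auto; apply gnull_null; auto|]. split; [split; auto; apply gnull_null; auto|]. split; [|split].
    + intros x hx; unfold interI; eapply (ideal_down I); [apply hI| eauto| apply inter_l].
    + intros x hx; unfold interI; eapply (ideal_down I); [apply hI| eauto| apply inter_l].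
    + intros [L [[hL _] [h1 h2]]]. apply (no_full_union L Z hL).
      * apply h2. unfold interI. apply (ideal_down I _ emp hI (ideal_emp I hI)).
        intros n hn'; unfold inter, compl in hn'; destruct (Z n); discriminate.
      * apply h1. unfold interI. apply (ideal_down I _ emp hI (ideal_emp I hI)).
        intros n hn'; unfold inter, compl in hn'; destruct (Z n); discriminate.
  - exfalso. apply full_not_gnull. apply gnull_sub with (1 := gnull_union2 _ _ F1 F2).
    intros Z _. apply NNPP; intro hc. apply hno. exists Z. split.
    + apply NNPP; intro h. apply hc. left. intro h'. apply h. apply gnull_sub with (1 := h'). intros a ha.
      rewrite ev_glue, od_glue. unfold interI in ha. eapply (ideal_down I); [exact hI| exact ha|].
      intros n hn'; unfold inter, Zs in *. destruct (a n), (Z n); simpl in *; auto.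
    + apply NNPP; intro h. apply hc. right. intro h'. apply h. apply gnull_sub with (1 := h'). intros a ha.
      rewrite ev_glue, od_glue. unfold interI in ha. eapply (ideal_down I); [exact hI| exact ha|].
      intros n hn'; unfold inter, Zs, compl in *. destruct (a n), (Z n); simpl in *; auto.
Qed.

Lemma inter_odds_glue x : inter x odds = glue emp (od x).
Proof. apply functional_extensionality; intros k. unfold inter, odds, glue, od, emp.
  destruct (Nat.Even_or_Odd k) as [[j ->]|[j ->]].
  - rewrite Nat.even_even. rewrite <- Nat.negb_even, Nat.even_even. apply andb_false_r.
  - rewrite Nat.even_odd, Nat.div2_odd'. rewrite <- Nat.negb_even, Nat.even_odd. rewrite andb_true_r.
    replace (2*j+1)%nat with (S (2*j)) by lia. reflexivity. Qed.
Lemma inter_evens_glue x : inter x evens = glue (ev x) emp.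
Proof. apply functional_extensionality; intros k. unfold inter, evens, glue, ev, emp.
  destruct (Nat.Even_or_Odd k) as [[j ->]|[j ->]].
  - rewrite Nat.even_even, Nat.div2_double, andb_true_r. reflexivity.
  - rewrite Nat.even_odd. apply andb_false_r. Qed.
Lemma split_eo x : sub_le x (union_sub (inter x evens) (inter x odds)).
Proof. intros n hn. unfold union_sub, inter, evens, odds. rewrite hn. rewrite <- Nat.negb_odd. destruct (Nat.odd n); reflexivity. Qed.

Lemma fin_od x : finite_sub (inter x odds) -> finite_sub (od x).
Proof. intros [N h]. exists N. intros n hn. unfold od. specialize (h (S (2*n)) ltac:(lia)). unfold inter, odds in h.
  rewrite Nat.odd_succ, Nat.even_even, andb_true_r in h. exact h. Qed.

Lemma C4 : ~ separative null_ideal.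
Proof.
  intros hsep. destruct max_ideal_exists as [M [hM [hMo hmax]]].
  pose (p := fun x => M x /\ qI x).
  destruct qI_meager_ideal as [hq _].
  assert (hqn : gnull qI).
  { apply gnull_sub with (G := fun x => finite_sub (od x)); [apply (pull_od (fun b => finite_sub b)), gnull_fin|].
    intros x hx; apply fin_od; auto. }
  assert (hp : null_ideal p).
  { split; [refine (conj _ (conj _ (conj _ _)))|].
    - intros x hx; split; [apply ideal_fin; auto| apply hq; auto].
    - intros x y [h1 h2] hxy; split; [eapply (ideal_down M); eauto| eapply (ideal_down qI); eauto].
    - intros x y [h1 h2] [h3 h4]; split; [apply ideal_union; auto| apply (ideal_union qI); auto].
    - intros [h _]. apply (ideal_proper M hM h).
    - apply gnull_null. apply gnull_sub with (1 := hqn). intros x [_ h]; exact h. }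
  destruct (hsep p qI hp (conj hq (gnull_null _ hqn))) as [r [[hr hrn] [hrp hnc]]].
  - intros hle. assert (hev : p evens) by (apply hle; unfold qI; eapply finite_sub_le; [apply finite_emp| apply evens_odds_disj, sub_refl]).
    destruct hev as [hev _]. apply (no_full_union M odds hM hMo). rewrite <- evens_compl; exact hev.
  - apply null_gnull in hrn. apply hnc.
    pose (A := fun a => r (glue a emp)). pose (B := fun b => r (glue emp b)).
    assert (hAB : gnull (fun x => A (ev x) /\ B (od x))).
    { apply gnull_sub with (1 := hrn). intros x [ha hb]. unfold A, B in *. rewrite <- inter_evens_glue in ha.
      rewrite <- inter_odds_glue in hb. eapply (ideal_down r); [exact hr| apply (ideal_union r _ _ hr ha hb)| apply split_eo]. }
    assert (hA : ~ gnull A).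
    { intros hA. apply full_not_gnull.
      assert (hA0 : gnull (fun a => M (glue a emp))).
      { apply gnull_sub with (1 := hA). intros a ha. unfold A. apply hrp. split; auto. unfold qI.
        rewrite inter_odds_glue. rewrite od_glue. eapply finite_sub_le; [apply finite_emp|].
        intros n hn; unfold glue, emp in hn; destruct (Nat.even n); discriminate. }
      apply gnull_sub with (1 := gnull_union2 _ _ hA0 (pull_compl _ hA0)). intros a _.
      destruct (hmax (glue a emp)) as [h|h]; [left; auto| right].
      eapply (ideal_down M); [exact hM| exact h|]. intros n hn. unfold glue, compl, emp in *.
      destruct (Nat.even n); simpl in *; auto. }
    pose proof (pull_od B (product_lemma A B hAB hA)) as hK.
    assert (hKi : is_ideal (interI r odds)).
    { apply interI_is_ideal; auto. intros hro. apply full_not_gnull. apply gnull_sub with (1 := hK).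
      intros x _. unfold B. rewrite <- inter_odds_glue. eapply (ideal_down r); [exact hr| exact hro| apply inter_r]. }
    exists (interI r odds). split; [split; auto|]; [|split].
    + apply gnull_null. apply gnull_sub with (1 := hK). intros x hx. unfold B. rewrite <- inter_odds_glue. exact hx.
    + intros x hx. unfold interI. eapply (ideal_down r); [exact hr| exact hx| apply inter_l].
    + intros x hx. unfold interI. apply (ideal_fin r _ hr). exact hx.
Qed.

Theorem mainTheorem8 :
  atomless meager_ideal /\ ~ separative meager_ideal /\
  atomless null_ideal /\ ~ separative null_ideal /\
  (forall I, meager_ideal I -> hered_meager_ideal (Phi I)) /\
  (forall H, hered_meager_ideal H ->
     exists I, meager_ideal I /\ (forall A, Phi I A <-> H A)) /\
  (forall I J, meager_ideal I -> meager_ideal J ->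
     ((forall A, Phi I A <-> Phi J A) <-> sq_equiv meager_ideal I J)) /\
  (forall I J, meager_ideal I -> meager_ideal J ->
     (ord_le (Phi I) (Phi J) <-> sq_le meager_ideal I J)).
Proof.
  split; [exact C1|]. split; [exact C2|]. split; [exact C3|]. split; [exact C4|].
  split; [exact C5|]. split; [exact C6|]. split; [exact C7| exact C8].
Qed.
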